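(* (i) $u_2u_1s_2^{-1}s_1s_2^{-1}\subset u_1\omega^{-2}+R_5s_2^{-2}s_1^2s_2^{-1}s_1s_2^{-1}+u_1u_2u_1u_2u_1\subset U''$. (ii) $u_2u_1s_2s_1^{-1}s_2\subset u_1\omega^{2}+R_5s_2^{2}s_1^{-2}s_2s_1^{-1}s_2+u_1u_2u_1u_2u_1\subset U''$.
   Context: Let $B_3=\langle s_1,s_2\mid s_1s_2s_1=s_2s_1s_2\rangle$, $R_5=\mathbb{Z}[a,b,c,d,e,e^{-1}]$, and let $H_5$ be the quotient of the group algebra $R_5B_3$ by the relations $s_i^5=as_i^4+bs_i^3+cs_i^2+ds_i+e$ for $i=1,2$; identify $s_i$ with their images. For $i=1,2$ let $u_i$ be the $R_5$-subalgebra of $H_5$ generated by $s_i$. Set $\omega=s_2s_1^2s_2$. For $R_5$-submodules (or elements) $X_1,\dots,X_n$, $X_1\cdots X_n$ denotes the $R_5$-submodule spanned by products $x_1\cdots x_n$, $x_j\in X_j$; sums are sums of submodules; $R_5x$ is the submodule spanned by $x$. Define $U'=u_1u_2u_1+u_1\omega+u_1\omega^{-1}+u_1s_2^{-1}s_1^2s_2^{-1}u_1+u_1s_2s_1^{-2}s_2u_1+u_1s_2^2s_1^2s_2^2u_1+u_1s_2^{-2}s_1^{-2}s_2^{-2}u_1+u_1s_2s_1^{-2}s_2^2u_1+u_1s_2^{-1}s_1^2s_2^{-2}u_1+u_1s_2^{-1}s_1s_2^{-1}u_1+u_1s_2s_1^{-1}s_2u_1+u_1s_2^{-2}s_1^{-2}s_2^2u_1+u_1s_2^2s_1^2s_2^{-2}u_1+u_1s_2^2s_1^{-2}s_2^2u_1+u_1s_2^{-2}s_1^2s_2^{-2}u_1+u_1s_2^{-2}s_1s_2^{-1}u_1+u_1s_2^{-1}s_1s_2^{-2}u_1$;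 $U''=U'+u_1\omega^2+u_1\omega^{-2}+u_1s_2^{-2}s_1^2s_2^{-1}s_1s_2^{-1}u_1+u_1s_2^2s_1^{-2}s_2s_1^{-1}s_2u_1+u_1s_2s_1^{-2}s_2^2s_1^{-2}s_2^2u_1+u_1s_2^{-1}s_1^2s_2^{-2}s_1^2s_2^{-2}u_1$. *)

(* Defs.v *)
From HB Require Import structures.
From mathcomp Require Import all_boot all_order all_algebra.
Set Implicit Arguments. Unset Strict Implicit. Unset Printing Implicit Defensive.
Import GRing.Theory.
Local Open Scope ring_scope.

(* R-submodules of an R-algebra A are represented by predicates A -> Prop. *)
Section Submodules.
Variables (R : comUnitRingType) (A : unitAlgType R).

Definition rspan (S : A -> Prop) : A -> Prop :=
  fun x => exists (n : nat) (r : 'I_n -> R) (v : 'I_n -> A),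
    (forall i, S (v i)) /\ x = \sum_(i < n) r i *: v i.

Definition rline (x : A) : A -> Prop := rspan (fun y => y = x).

Definition mprod (X Y : A -> Prop) : A -> Prop :=
  rspan (fun z => exists x y, X x /\ Y y /\ z = x * y).

Definition msum (X Y : A -> Prop) : A -> Prop :=
  fun z => exists x y, X x /\ Y y /\ z = x + y.

Definition msub (X Y : A -> Prop) : Prop := forall z, X z -> Y z.

(* u_i : R-subalgebra generated by s = R-span of the powers s^k, k >= 0 *)
Definition usub (s : A) : A -> Prop := rspan (fun y => exists k : nat, y = s ^+ k).

Variables (s1 s2 : A).
Definition u1 := usub s1.
Definition u2 := usub s2.
Definition omega := s2 * s1 ^+ 2 * s2.

Definition u1xu1 (x : A) := mprod (mprod u1 (rline x)) u1.
Definition u1x (x : A) := mprod u1 (rline x).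

Definition U' : A -> Prop :=
  msum (mprod (mprod u1 u2) u1) (
  msum (u1x omega) (
  msum (u1x omega^-1) (
  msum (u1xu1 (s2^-1 * s1^+2 * s2^-1)) (
  msum (u1xu1 (s2 * s1^-2 * s2)) (
  msum (u1xu1 (s2^+2 * s1^+2 * s2^+2)) (
  msum (u1xu1 (s2^-2 * s1^-2 * s2^-2)) (
  msum (u1xu1 (s2 * s1^-2 * s2^+2)) (
  msum (u1xu1 (s2^-1 * s1^+2 * s2^-2)) (
  msum (u1xu1 (s2^-1 * s1 * s2^-1)) (
  msum (u1xu1 (s2 * s1^-1 * s2)) (
  msum (u1xu1 (s2^-2 * s1^-2 * s2^+2)) (
  msum (u1xu1 (s2^+2 * s1^+2 * s2^-2)) (
  msum (u1xu1 (s2^+2 * s1^-2 * s2^+2)) (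
  msum (u1xu1 (s2^-2 * s1^+2 * s2^-2)) (
  msum (u1xu1 (s2^-2 * s1 * s2^-1))
       (u1xu1 (s2^-1 * s1 * s2^-2))))))))))))))))).

Definition U'' : A -> Prop :=
  msum U' (
  msum (u1x (omega ^+ 2)) (
  msum (u1x (omega ^- 2)) (
  msum (u1xu1 (s2^-2 * s1^+2 * s2^-1 * s1 * s2^-1)) (
  msum (u1xu1 (s2^+2 * s1^-2 * s2 * s1^-1 * s2)) (
  msum (u1xu1 (s2 * s1^-2 * s2^+2 * s1^-2 * s2^+2))
       (u1xu1 (s2^-1 * s1^+2 * s2^-2 * s1^+2 * s2^-2))))))).

Definition u12121 : A -> Prop := mprod (mprod (mprod (mprod u1 u2) u1) u2) u1.

End Submodules.

Definition H5_rels (R : comUnitRingType) (A : unitAlgType R)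
  (a b c d e : R) (s1 s2 : A) : Prop :=
  [/\ e \is a GRing.unit, s1 \is a GRing.unit /\ s2 \is a GRing.unit,
      s1 * s2 * s1 = s2 * s1 * s2,
      s1 ^+ 5 = a *: s1 ^+ 4 + b *: s1 ^+ 3 + c *: s1 ^+ 2 + d *: s1 + e%:A
    & s2 ^+ 5 = a *: s2 ^+ 4 + b *: s2 ^+ 3 + c *: s2 ^+ 2 + d *: s2 + e%:A].

(* Main.v *)
Require Import Defs.
From HB Require Import structures.
From mathcomp Require Import all_boot all_order all_algebra zify.
Import GRing.Theory.
Local Open Scope ring_scope.

Module Aux.
Set Implicit Arguments. Unset Strict Implicit. Unset Printing Implicit Defensive.

(* syllable: (true = s1 / false = s2, exponent) *)
Definition word := seq (bool * int).
Definition letter := (bool * bool)%type. (* (is_s, positive) *)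

Definition expand (y : bool * int) : seq letter :=
  match y.2 with Posz n => nseq n (y.1, true) | Negz n => nseq n.+1 (y.1, false) end.

Definition state := (int * seq bool)%type.
Definition push_tok (st : state) (tk : bool) : state :=
  if tk then (match st.2 with true :: r => (st.1 + 1, r) | _ => (st.1, true :: st.2) end)
  else (match st.2 with false :: false :: r => (st.1 + 1, r) | _ => (st.1, false :: st.2) end).
Definition toks (l : letter) : seq bool :=
  match l with
  | (true, true) => [:: false; false; true]
  | (false, true) => [:: true; false; false]
  | (true, false) => [:: true; false]
  | (false, false) => [:: false; true]
  end.
Definition push_letter (st : state) (l : letter) : state :=
  foldl push_tok (st.1 - 1, st.2) (toks l).
Definition nf (w : word) : state := foldl push_letter (0, [::]) (flatten (map expand w)).

Section Interp.
Variables (R : comUnitRingType) (A : unitAlgType R) (s t : A).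
Definition isyl (y : bool * int) : A := (if y.1 then s else t) ^ y.2.
Definition interp (w : word) : A := foldl (fun acc y => acc * isyl y) 1 w.
Definition ilet (l : letter) : A := (if l.1 then s else t) ^ (if l.2 then 1 else -1).
Definition x := s * t * s.
Definition y := s * t.
Definition z := x * x.
Definition tokv (b : bool) := if b then x else y.
Fixpoint vst (st : seq bool) : A := if st is tk :: r then vst r * tokv tk else 1.
Definition val (st : state) := z ^ st.1 * vst st.2.

Hypothesis su : s \is a GRing.unit.
Hypothesis tu : t \is a GRing.unit.
Hypothesis br : s * t * s = t * s * t.

Lemma brL p : p * s * t * s = p * t * s * t.
Proof. by have := congr1 (fun u => p * u) br; rewrite /= !mulrA. Qed.

Lemma zu : z \is a GRing.unit.
Proof. have xu : x \is a GRing.unit by rewrite /x !unitrMl.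
by rewrite /z unitrMl. Qed.

Lemma y3 : y * y * y = z.
Proof. by rewrite /y /z /x !mulrA [RHS]brL. Qed.

Lemma zcx : GRing.comm z x. Proof. by rewrite /GRing.comm /z mulrA. Qed.
Lemma zcy : GRing.comm z y. Proof. by rewrite /GRing.comm -y3 !mulrA. Qed.

Lemma zcv st : GRing.comm z (vst st).
Proof.
elim: st => [|tk r IH] /=; first exact: commr1.
apply: commrM => //; case: tk; [exact: zcx | exact: zcy].
Qed.

Lemma gstep (u v p q : A) : q = p * p -> GRing.comm q v -> u * q * v = u * (v * p) * p.
Proof. by move=> -> H; rewrite -mulrA H !mulrA. Qed.
Lemma gstep3 (u v p q : A) : q = p * p * p -> GRing.comm q v -> u * q * v = u * (v * p * p) * p.
Proof. by move=> -> H; rewrite -mulrA H !mulrA. Qed.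

Lemma push_tok_ok st tk : val (push_tok st tk) = val st * tokv tk.
Proof.
case: st => n st; rewrite /push_tok /val /=.
case: tk => /=.
  case: st => [|[] r] /=; try exact: mulrA.
  by rewrite exprzDr ?zu // expr1z; apply: gstep => //; apply: zcv.
case: st => [|[] r] /=; try exact: mulrA.
case: r => [|[] r] /=; try exact: mulrA.
by rewrite exprzDr ?zu // expr1z; apply: gstep3; [rewrite y3|apply: zcv].
Qed.

Lemma foldl_mulA (T : Type) (f : T -> A) (ts : seq T) (u v : A) :
  foldl (fun a b => a * f b) (u * v) ts = u * foldl (fun a b => a * f b) v ts.
Proof. by elim: ts u v => [|? ? IH] u v //=; rewrite -mulrA IH. Qed.
Lemma foldl_mul1 (T : Type) (f : T -> A) (ts : seq T) (u : A) :
  foldl (fun a b => a * f b) u ts = u * foldl (fun a b => a * f b) 1 ts.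
Proof. by rewrite -foldl_mulA mulr1. Qed.

Lemma push_toks_ok st ts : val (foldl push_tok st ts) = val st * foldl (fun a b => a * tokv b) 1 ts.
Proof.
elim: ts st => [|tk ts IH] st /=; first by rewrite mulr1.
by rewrite IH push_tok_ok mul1r [in RHS]foldl_mul1 mulrA.
Qed.

Lemma zs : z * s = y * y * x.
Proof. by rewrite /z /y /x !mulrA [in LHS]brL. Qed.
Lemma zt : z * t = x * y * y.
Proof. by rewrite /z /y /x !mulrA. Qed.
Lemma zsi : z * s^-1 = x * y.
Proof. by rewrite -[x * y](mulrK su) /z /y /x !mulrA. Qed.
Lemma zti : z * t^-1 = y * x.
Proof. by rewrite -[y * x](mulrK tu) /z /y /x !mulrA [in LHS]brL. Qed.

Lemma expN1 (u : A) : u ^ (-1) = u^-1. Proof. exact: erefl. Qed.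
Lemma zK (u v : A) : z * u = v -> u = z^-1 * v.
Proof. by move=> <-; rewrite mulKr // zu. Qed.

Lemma letv l : z^-1 * foldl (fun a b => a * tokv b) 1 (toks l) = ilet l.
Proof.
case: l => [[] []] /=; rewrite /ilet /= !mul1r ?expr1z.
- by rewrite (zK zs).
- by rewrite expN1 (zK zsi).
- by rewrite (zK zt).
- by rewrite expN1 (zK zti).
Qed.

Lemma push_letter_ok st l : val (push_letter st l) = val st * ilet l.
Proof.
rewrite /push_letter push_toks_ok -letv /val /=.
rewrite exprzDr ?zu // expN1 !mulrA; congr (_ * _).
rewrite -!mulrA; congr (_ * _); apply/esym; apply: commrV; apply/commr_sym; apply: zcv.
Qed.

Lemma push_letters_ok st ls : val (foldl push_letter st ls) = val st * foldl (fun a b => a * ilet b) 1 ls.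
Proof.
elim: ls st => [|l ls IH] st /=; first by rewrite mulr1.
by rewrite IH push_letter_ok mul1r [in RHS]foldl_mul1 mulrA.
Qed.

Lemma foldl_nseq (T : Type) (f : T -> A) n v : foldl (fun a b => a * f b) 1 (nseq n v) = f v ^+ n.
Proof.
elim: n => [|n IH] //=; by rewrite mul1r foldl_mul1 IH exprS.
Qed.

Lemma isyl_exp yy : isyl yy = foldl (fun a b => a * ilet b) 1 (expand yy).
Proof.
case: yy => L [n|n]; rewrite /isyl /expand foldl_nseq /ilet /=.
  by rewrite expr1z.
by rewrite expN1 exprVn.
Qed.

Lemma interp_val w : interp w = val (nf w).
Proof.
rewrite /nf push_letters_ok /val /= expr0z !mul1r /interp.
elim: w => [|yy w IH] //=.
by rewrite foldl_cat mul1r foldl_mul1 IH isyl_exp -foldl_mulA mulr1.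
Qed.

Lemma nf_sound w1 w2 : nf w1 == nf w2 -> interp w1 = interp w2.
Proof. by move/eqP=> H; rewrite !interp_val H. Qed.

Lemma interp_cat w1 w2 : interp (w1 ++ w2) = interp w1 * interp w2.
Proof. by rewrite /interp foldl_cat foldl_mul1. Qed.
End Interp.

Lemma int_window (f : int -> Prop) m :
 (forall k, f k -> f (k+1) -> f (k+2) -> f (k+3) -> f (k+4) -> f (k+5)) ->
 (forall k, f (k+1) -> f (k+2) -> f (k+3) -> f (k+4) -> f (k+5) -> f k) ->
 f m -> f (m+1) -> f (m+2) -> f (m+3) -> f (m+4) -> forall l, f l.
Proof.
move=> Hu Hd f0 f1 f2 f3 f4.
have up : forall n : nat, [/\ f (m + n%:Z), f (m + n%:Z + 1), f (m + n%:Z + 2), f (m + n%:Z + 3) & f (m + n%:Z + 4)].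
  elim=> [|n [g0 g1 g2 g3 g4]]; first by rewrite addr0.
  have -> : m + n.+1%:Z = m + n%:Z + 1 by lia.
  have -> : m + n%:Z + 1 + 1 = m + n%:Z + 2 by lia.
  have -> : m + n%:Z + 1 + 2 = m + n%:Z + 3 by lia.
  have -> : m + n%:Z + 1 + 3 = m + n%:Z + 4 by lia.
  have -> : m + n%:Z + 1 + 4 = m + n%:Z + 5 by lia.
  split => //; exact: Hu.
have dn : forall n : nat, [/\ f (m - n%:Z), f (m - n%:Z + 1), f (m - n%:Z + 2), f (m - n%:Z + 3) & f (m - n%:Z + 4)].
  elim=> [|n [g0 g1 g2 g3 g4]]; first by rewrite subr0.
  have -> : m - n.+1%:Z + 1 = m - n%:Z by lia.
  have -> : m - n.+1%:Z + 2 = m - n%:Z + 1 by lia.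
  have -> : m - n.+1%:Z + 3 = m - n%:Z + 2 by lia.
  have -> : m - n.+1%:Z + 4 = m - n%:Z + 3 by lia.
  split => //; apply: Hd.
  - by have -> : m - n.+1%:Z + 1 = m - n%:Z by lia.
  - by have -> : m - n.+1%:Z + 2 = m - n%:Z + 1 by lia.
  - by have -> : m - n.+1%:Z + 3 = m - n%:Z + 2 by lia.
  - by have -> : m - n.+1%:Z + 4 = m - n%:Z + 3 by lia.
  - by have -> : m - n.+1%:Z + 5 = m - n%:Z + 4 by lia.
move=> l; case E: (l - m) => [n|n].
  by case: (up n) => + _ _ _ _; rewrite -E; rewrite (_ : m + (l - m) = l); last by lia.
case: (dn n.+1) => + _ _ _ _.
by rewrite (_ : m - n.+1%:Z = l) //; move: E; rewrite NegzE; lia.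
Qed.

Section Sub.
Variables (R : comUnitRingType) (A : unitAlgType R).

Definition submod (S : A -> Prop) :=
  [/\ S 0, (forall u v, S u -> S v -> S (u + v)) & (forall (r : R) u, S u -> S (r *: u))].

Lemma sm0 S : submod S -> S 0. Proof. by case. Qed.
Lemma smD S u v : submod S -> S u -> S v -> S (u + v). Proof. by case=> _ H _; apply: H. Qed.
Lemma smZ S (r : R) u : submod S -> S u -> S (r *: u). Proof. by case=> _ _ H; apply: H. Qed.
Lemma smN S u : submod S -> S u -> S (- u).
Proof. by move=> H Hu; rewrite -scaleN1r; apply: smZ. Qed.
Lemma smB S u v : submod S -> S u -> S v -> S (u - v).
Proof. by move=> H Hu Hv; apply: smD => //; apply: smN. Qed.

Lemma rspan_submod P : submod (rspan P).
Proof.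
split.
- by exists 0%N, (fun _ => 0), (fun _ => 0); split; [case|rewrite big_ord0].
- move=> u v [n [r [w [Hw ->]]]] [n' [r' [w' [Hw' ->]]]].
  exists (n + n')%N, (fun i => match split i with inl j => r j | inr j => r' j end),
    (fun i => match split i with inl j => w j | inr j => w' j end).
  split; first by move=> i; case: (split i).
  rewrite big_split_ord /=; congr (_ + _); apply: eq_bigr => i _.
    by rewrite (unsplitK (inl i : 'I_n + 'I_n')).
  by rewrite (unsplitK (inr i : 'I_n + 'I_n')).
- move=> k u [n [r [w [Hw ->]]]]; exists n, (fun i => k * r i), w; split => //.
  by rewrite scaler_sumr; apply: eq_bigr => i _; rewrite scalerA.
Qed.

Lemma rspan_in (P : A -> Prop) u : P u -> rspan P u.
Proof.
move=> Hu; exists 1%N, (fun _ => 1), (fun _ => u); split => //.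
by rewrite big_ord1 scale1r.
Qed.

Lemma rspan_sub (P S : A -> Prop) : submod S -> (forall u, P u -> S u) -> forall u, rspan P u -> S u.
Proof.
move=> HS HP u [n [r [w [Hw ->]]]].
elim/big_ind: _ => //; [exact: sm0|by move=> ? ? ? ?; apply: smD|].
by move=> i _; apply: smZ => //; apply: HP.
Qed.

Lemma msum_submod S T : submod S -> submod T -> submod (msum S T).
Proof.
move=> HS HT; split.
- by exists 0, 0; split; [exact: sm0|split; [exact: sm0|rewrite addr0]].
- move=> u v [u1 [u2 [H1 [H2 ->]]]] [v1 [v2 [H3 [H4 ->]]]].
  exists (u1 + v1), (u2 + v2); split; [exact: smD|split; [exact: smD|]].
  by rewrite addrACA.
- move=> r u [u1 [u2 [H1 [H2 ->]]]]; exists (r *: u1), (r *: u2).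
  by split; [exact: smZ|split; [exact: smZ|rewrite scalerDr]].
Qed.

Lemma msum_l S T u : submod T -> S u -> msum S T u.
Proof. by move=> HT Hu; exists u, 0; split => //; split; [exact: sm0|rewrite addr0]. Qed.
Lemma msum_r S T u : submod S -> T u -> msum S T u.
Proof. by move=> HS Hu; exists 0, u; split; [exact: sm0|split => //; rewrite add0r]. Qed.

Lemma mprod_submod X Y : submod (mprod X Y). Proof. exact: rspan_submod. Qed.
Lemma mprod_in (X Y : A -> Prop) u v : X u -> Y v -> mprod X Y (u * v).
Proof. by move=> Hu Hv; apply: rspan_in; exists u, v. Qed.

Lemma submod_mul S p q : submod S -> submod (fun u => S (p * u * q)).
Proof.
move=> HS; split.
- by rewrite mulr0 mul0r; apply: sm0.
- by move=> u v Hu Hv; rewrite mulrDr mulrDl; apply: smD.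
- by move=> r u Hu; rewrite -scalerAr -scalerAl; apply: smZ.
Qed.

Lemma submod_and (S T : A -> Prop) : submod S -> submod T -> submod (fun u => S u /\ T u).
Proof.
move=> HS HT; split.
- by split; apply: sm0.
- by move=> u v [? ?] [? ?]; split; apply: smD.
- by move=> r u [? ?]; split; apply: smZ.
Qed.

Lemma submod_all (I : Type) (S : I -> A -> Prop) : (forall i, submod (S i)) -> submod (fun u => forall i, S i u).
Proof.
move=> HS; split.
- by move=> i; apply: sm0.
- by move=> u v Hu Hv i; apply: smD.
- by move=> r u Hu i; apply: smZ.
Qed.

Lemma mprod_sub X Y S : submod S -> (forall u v, X u -> Y v -> S (u * v)) -> forall u, mprod X Y u -> S u.
Proof. by move=> HS H; apply: rspan_sub => // u [x [y [Hx [Hy ->]]]]; apply: H. Qed.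

Section Quint.
Variables (a b c d e : R) (t : A).
Hypothesis tu : t \is a GRing.unit.
Hypothesis eu : e \is a GRing.unit.
Hypothesis q5 : t ^+ 5 = a *: t ^+ 4 + b *: t ^+ 3 + c *: t ^+ 2 + d *: t + e%:A.

Lemma quint_up k : t ^ (k + 5) = a *: t ^ (k+4) + b *: t ^ (k+3) + c *: t ^ (k+2) + d *: t ^ (k+1) + e *: t ^ k.
Proof.
rewrite [t ^ (k + 5)]exprzDr // [t ^ (k + 4)]exprzDr // [t ^ (k + 3)]exprzDr //.
rewrite [t ^ (k + 2)]exprzDr // [t ^ (k + 1)]exprzDr //.
rewrite (_ : t ^ 5 = t ^+ 5) // q5 (_ : t ^ 4 = t ^+ 4) // (_ : t ^ 3 = t ^+ 3) //.
rewrite (_ : t ^ 2 = t ^+ 2) // expr1z.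
by rewrite !mulrDr -!scalerAr mulr1.
Qed.

Lemma quint_dn k : t ^ k = e^-1 *: (t ^ (k + 5) - (a *: t ^ (k+4) + b *: t ^ (k+3) + c *: t ^ (k+2) + d *: t ^ (k+1))).
Proof. by rewrite quint_up (addrC _ (e *: _)) addrK scalerA mulVr ?scale1r. Qed.

Lemma window S p q m : submod S ->
  (forall r : nat, (r < 5)%N -> S (p * t ^ (m + r%:Z) * q)) -> forall l, S (p * t ^ l * q).
Proof.
move=> HS Hr; have HS' := submod_mul p q HS.
apply: (@int_window (fun k => S (p * t ^ k * q)) m).
- move=> k H0 H1 H2 H3 H4; rewrite quint_up.
  by repeat apply: (smD HS') => //; apply: (smZ _ HS').
- move=> k H1 H2 H3 H4 H5; rewrite quint_dn.
  apply: (smZ _ HS'); apply: (smB HS') => //.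
  by repeat apply: (smD HS') => //; apply: (smZ _ HS').
- by rewrite -[m]addr0; apply: Hr.
- exact: (Hr 1%N).
- exact: (Hr 2%N).
- exact: (Hr 3%N).
- exact: (Hr 4%N).
Qed.

Lemma usub_int l : usub t (t ^ l).
Proof.
rewrite -[t ^ l]mul1r -[_ * _]mulr1.
apply: (@window (usub t) 1 1 0) => [|r _]; first exact: rspan_submod.
by rewrite add0r mul1r mulr1; apply: rspan_in; exists r.
Qed.

End Quint.
End Sub.

Lemma submod_mull (R : comUnitRingType) (A : unitAlgType R) (S : A -> Prop) p : submod S -> submod (fun u => S (p * u)).
Proof.
move=> HS; split.
- by rewrite mulr0; apply: sm0.
- by move=> u v Hu Hv; rewrite mulrDr; apply: smD.
- by move=> r u Hu; rewrite -scalerAr; apply: smZ.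
Qed.
Lemma submod_mulr (R : comUnitRingType) (A : unitAlgType R) (S : A -> Prop) q : submod S -> submod (fun u => S (u * q)).
Proof.
move=> HS; split.
- by rewrite mul0r; apply: sm0.
- by move=> u v Hu Hv; rewrite mulrDl; apply: smD.
- by move=> r u Hu; rewrite -scalerAl; apply: smZ.
Qed.

Inductive just :=
 | JB of word & int & int
 | JE of word
 | JR of (nat * int * int)
 | JW of nat & int & (nat * int * int) & (nat * int * int) & (nat * int * int) & (nat * int * int) & (nat * int * int).

Definition shift (i : int) (w : word) (j : int) : word := (true, i) :: w ++ [:: (true, j)].

Definition ref_ok (facts : seq (word * bool)) (v : word) (rf : nat * int * int) : option bool :=
  let: (k, i, j) := rf in
  if (k < size facts)%N then
    let f := nth ([::], false) facts k in
    if f.2 then (if nf v == nf (shift i f.1 j) then Some true else None)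
    else (if nf v == nf f.1 then Some false else None)
  else None.

Definition wsub (w : word) (pos : nat) (m : int) : word :=
  take pos w ++ ((nth (true, 0) w pos).1, m) :: drop pos.+1 w.

Definition comb (o1 o2 : option bool) : option bool :=
  match o1, o2 with Some b1, Some b2 => Some (b1 && b2) | _, _ => None end.

Definition step (famB famE : word -> bool) (facts : seq (word * bool)) (w : word) (j : just) : option bool :=
  match j with
  | JB wf i k => if famB wf && (nf w == nf (shift i wf k)) then Some true else None
  | JE wf => if famE wf && (nf w == nf wf) then Some false else None
  | JR rf => ref_ok facts w rf
  | JW pos m r0 r1 r2 r3 r4 =>
    if (pos < size w)%N then
      comb (ref_ok facts (wsub w pos m) r0)
      (comb (ref_ok facts (wsub w pos (m + 1)) r1)
      (comb (ref_ok facts (wsub w pos (m + 2%:Z)) r2)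
      (comb (ref_ok facts (wsub w pos (m + 3%:Z)) r3)
            (ref_ok facts (wsub w pos (m + 4%:Z)) r4))))
    else None
  end.

Fixpoint run famB famE (facts : seq (word * bool)) (cert : seq (word * just)) : seq (word * bool) :=
  match cert with
  | [::] => facts
  | (w, j) :: c =>
    match step famB famE facts w j with
    | Some k => run famB famE (rcons facts (w, k)) c
    | None => run famB famE facts c
    end
  end.

Section Sound.
Variables (R : comUnitRingType) (A : unitAlgType R) (a b c d e : R) (s t : A).
Hypotheses (su : s \is a GRing.unit) (tu : t \is a GRing.unit) (eu : e \is a GRing.unit).
Hypothesis br : s * t * s = t * s * t.
Hypothesis q5s : s ^+ 5 = a *: s ^+ 4 + b *: s ^+ 3 + c *: s ^+ 2 + d *: s + e%:A.
Hypothesis q5t : t ^+ 5 = a *: t ^+ 4 + b *: t ^+ 3 + c *: t ^+ 2 + d *: t + e%:A.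
Variable S : A -> Prop.
Hypothesis HS : submod S.
Variables famB famE : word -> bool.

Definition Bi w := forall i j : int, S (s ^ i * interp s t w * s ^ j).
Definition Ex w := S (interp s t w).
Definition holds (f : word * bool) := if f.2 then Bi f.1 else Ex f.1.

Hypothesis HB : forall w, famB w -> Bi w.
Hypothesis HE : forall w, famE w -> Ex w.

Lemma interp1 y : interp s t [:: y] = isyl s t y.
Proof. by rewrite /interp /= mul1r. Qed.

Lemma interp_shift i w j : interp s t (shift i w j) = s ^ i * interp s t w * s ^ j.
Proof. by rewrite /shift -cat1s !interp_cat !interp1 mulrA. Qed.

Lemma Bi_Ex w : Bi w -> Ex w.
Proof. by move=> H; move: (H 0 0); rewrite !expr0z mul1r mulr1. Qed.

Lemma Bi_shift w i j v : Bi w -> interp s t v = interp s t (shift i w j) -> Bi v.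
Proof.
move=> H E i' j'; rewrite E interp_shift !mulrA -exprzDr // -!mulrA -exprzDr //.
by rewrite !mulrA; apply: H.
Qed.

Definition facts_ok (facts : seq (word * bool)) := forall k, (k < size facts)%N -> holds (nth ([::], false) facts k).

Lemma ref_ok_sound facts v rf kd : facts_ok facts -> ref_ok facts v rf = Some kd -> holds (v, kd).
Proof.
case: rf => [[k i] j] Hf /=.
case: ifP => // Hk.
have := Hf k Hk; rewrite /holds.
case: (nth _ facts k) => fw [] /= Hw.
  case: ifP => // /(nf_sound su tu br) E [<-] /=; exact: (Bi_shift Hw E).
case: ifP => // /(nf_sound su tu br) E [<-] /=; by rewrite /Ex E.
Qed.

Lemma comb_some o1 o2 kd : comb o1 o2 = Some kd ->
  exists k1 k2, [/\ o1 = Some k1, o2 = Some k2 & kd = k1 && k2].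
Proof. by case: o1 o2 => [k1|] [k2|] //= [<-]; exists k1, k2. Qed.

Lemma holds_weak v kd : holds (v, kd) -> Ex v.
Proof. by case: kd => //=; apply: Bi_Ex. Qed.

Lemma interp_wsub w pos m : (pos < size w)%N ->
  interp s t (wsub w pos m) = interp s t (take pos w) * ((if (nth (true, 0) w pos).1 then s else t) ^ m) * interp s t (drop pos.+1 w)
  /\ interp s t w = interp s t (take pos w) * ((if (nth (true, 0) w pos).1 then s else t) ^ (nth (true, 0) w pos).2) * interp s t (drop pos.+1 w).
Proof.
move=> Hp; split; first by rewrite /wsub -cat1s !interp_cat interp1 mulrA.
by rewrite -{1}(cat_take_drop pos w) (drop_nth (true, 0) Hp) -cat1s !interp_cat interp1 mulrA.
Qed.

Lemma win_gen (u : A) p q m (l : int) (T : A -> Prop) : submod T -> (u = s \/ u = t) ->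
  (forall r : nat, (r < 5)%N -> T (p * u ^ (m + r%:Z) * q)) -> T (p * u ^ l * q).
Proof.
move=> HT [->|->] H.
  by apply: (window su eu q5s HT H).
by apply: (window tu eu q5t HT H).
Qed.

Lemma mul5A (x1 x2 x3 x4 x5 : A) : x1 * (x2 * x3 * x4) * x5 = (x1 * x2) * x3 * (x4 * x5).
Proof. by rewrite !mulrA. Qed.

Lemma win_Bi w pos m : (pos < size w)%N -> (forall r : nat, (r < 5)%N -> Bi (wsub w pos (m + r%:Z))) -> Bi w.
Proof.
move=> Hp H i j; have [_ ->] := interp_wsub m Hp.
rewrite mul5A; apply: (win_gen (m := m)) => //; first by case: (nth _ w pos).1; [left|right].
move=> r Hr; have := H r Hr i j; have [-> _] := interp_wsub (m + r%:Z) Hp.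
by rewrite mul5A.
Qed.

Lemma win_Ex w pos m : (pos < size w)%N -> (forall r : nat, (r < 5)%N -> Ex (wsub w pos (m + r%:Z))) -> Ex w.
Proof.
move=> Hp H; rewrite /Ex; have [_ ->] := interp_wsub m Hp.
apply: (win_gen (m := m)) => //; first by case: (nth _ w pos).1; [left|right].
move=> r Hr; have := H r Hr; rewrite /Ex; have [-> _] := interp_wsub (m + r%:Z) Hp.
by [].
Qed.

Lemma step_sound facts w j kd : facts_ok facts -> step famB famE facts w j = Some kd -> holds (w, kd).
Proof.
move=> Hf; case: j => [wf i k|wf|rf|pos m r0 r1 r2 r3 r4] /=.
- case: ifP => // /andP [Hw /(nf_sound su tu br) E] [<-] /=.
  exact: (Bi_shift (HB Hw) E).
- case: ifP => // /andP [Hw /(nf_sound su tu br) E] [<-] /=.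
  by rewrite /holds /= /Ex E; apply: HE.
- exact: ref_ok_sound.
case: ifP => // Hp.
move/comb_some=> [k0 [? [E0 + ->]]].
move/comb_some=> [k1 [? [E1 + ->]]].
move/comb_some=> [k2 [? [E2 + ->]]].
move/comb_some=> [k3 [k4 [E3 E4 ->]]].
have H0 := ref_ok_sound Hf E0; have H1 := ref_ok_sound Hf E1; have H2 := ref_ok_sound Hf E2.
have H3 := ref_ok_sound Hf E3; have H4 := ref_ok_sound Hf E4.
have W0 := holds_weak H0; have W1 := holds_weak H1; have W2 := holds_weak H2.
have W3 := holds_weak H3; have W4 := holds_weak H4.
clear E0 E1 E2 E3 E4.
case: k0 H0 => H0; case: k1 H1 => H1; case: k2 H2 => H2; case: k3 H3 => H3; case: k4 H4 => H4 /=;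
 first [apply: (win_Bi (m := m) Hp) | apply: (win_Ex (m := m) Hp)];
 (case=> [|[|[|[|[|]]]]] //= _; rewrite ?addr0; assumption).
Qed.

Lemma run_sound facts cert : facts_ok facts -> facts_ok (run famB famE facts cert).
Proof.
elim: cert facts => [|[w j] cr IH] facts Hf //=.
case E: (step famB famE facts w j) => [kd|]; apply: IH => //.
move=> k; rewrite size_rcons ltnS leq_eqVlt => /orP [/eqP ->|Hk].
  by rewrite nth_rcons ltnn eqxx; apply: step_sound E.
by rewrite nth_rcons Hk; apply: Hf.
Qed.

Lemma run_mem cert w kd : (w, kd) \in run famB famE [::] cert -> holds (w, kd).
Proof.
move=> H; have Hs := @run_sound [::] cert (fun k => ltac:(by [])).
move: H; move/(nthP ([::], false)) => [k Hk <-]; exact: Hs.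
Qed.
End Sound.

Definition certU : seq (word * just) := [::
  ([:: (false, Negz 1); (true, Negz 1); (false, Negz 1)], JB [:: (false, Negz 1); (true, Negz 1); (false, Negz 1)] (Posz 0) (Posz 0));
  ([:: (false, Negz 1); (true, Negz 1); (false, Negz 1)], JR (0, Posz 0, Posz 0));
  ([:: (false, Negz 0); (true, Negz 1); (false, Negz 0)], JB [:: (false, Negz 0); (true, Negz 1); (false, Negz 0)] (Posz 0) (Posz 0));
  ([:: (false, Negz 0)], JB [:: (false, Negz 0)] (Posz 0) (Posz 0));
  ([:: (false, Negz 1)], JB [:: (false, Negz 1)] (Posz 0) (Posz 0));
  ([:: (false, Negz 0); (true, Posz 1); (false, Negz 0)], JB [:: (false, Negz 0); (true, Posz 1); (false, Negz 0)] (Posz 0) (Posz 0));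
  ([:: (false, Negz 0); (true, Posz 2); (false, Negz 0)], JB [:: (false, Negz 0); (true, Posz 2); (false, Negz 0)] (Posz 0) (Posz 0));
  ([:: (false, Negz 2); (true, Negz 0); (false, Negz 1)], JW 0 (Negz 1) (2, Negz 7, Posz 7) (3, Negz 1, Negz 0) (4, Negz 0, Posz 0) (5, Negz 0, Posz 0) (6, Negz 0, Posz 0));
  ([:: (false, Negz 1); (true, Negz 1); (false, Negz 0)], JR (7, Posz 0, Posz 1));
  ([:: (false, Negz 1); (true, Negz 1); (false, Posz 0)], JR (4, Posz 0, Negz 1));
  ([:: (false, Negz 0); (true, Posz 1); (false, Negz 1)], JB [:: (false, Negz 0); (true, Posz 1); (false, Negz 1)] (Posz 0) (Posz 0));
  ([:: (false, Negz 1); (true, Negz 1); (false, Posz 1)], JR (10, Posz 0, Negz 0));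
  ([:: (false, Negz 1); (true, Negz 1); (false, Posz 2)], JB [:: (false, Negz 1); (true, Negz 1); (false, Posz 2)] (Posz 0) (Posz 0));
  ([:: (false, Negz 1); (true, Negz 1); (false, Posz 2)], JR (12, Posz 0, Posz 0));
  ([:: (false, Negz 1); (true, Negz 0); (false, Negz 1)], JR (2, Negz 7, Posz 7));
  ([:: (false, Negz 1); (true, Negz 0); (false, Negz 0)], JR (3, Negz 0, Negz 1));
  ([:: (false, Negz 1); (true, Negz 0); (false, Posz 0)], JR (4, Posz 0, Negz 0));
  ([:: (false, Negz 1); (true, Negz 0); (false, Posz 1)], JR (5, Posz 0, Negz 0));
  ([:: (false, Negz 1); (true, Negz 0); (false, Posz 2)], JR (6, Posz 0, Negz 0));
  ([:: (false, Negz 3)], JB [:: (false, Negz 3)] (Posz 0) (Posz 0));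
  ([:: (false, Negz 1); (true, Posz 0); (false, Negz 1)], JR (19, Posz 0, Posz 0));
  ([:: (false, Negz 2)], JB [:: (false, Negz 2)] (Posz 0) (Posz 0));
  ([:: (false, Negz 1); (true, Posz 0); (false, Negz 0)], JR (21, Posz 0, Posz 0));
  ([:: (false, Negz 1); (true, Posz 0); (false, Posz 0)], JR (4, Posz 0, Posz 0));
  ([:: (false, Negz 1); (true, Posz 0); (false, Posz 1)], JR (3, Posz 0, Posz 0));
  ([:: (false, Posz 0)], JB [:: (false, Posz 0)] (Posz 0) (Posz 0));
  ([:: (false, Negz 1); (true, Posz 0); (false, Posz 2)], JR (25, Negz 7, Posz 8));
  ([:: (false, Negz 1); (true, Posz 1); (false, Negz 0)], JB [:: (false, Negz 1); (true, Posz 1); (false, Negz 0)] (Posz 0) (Posz 0));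
  ([:: (false, Posz 1)], JB [:: (false, Posz 1)] (Posz 0) (Posz 0));
  ([:: (false, Posz 1); (true, Negz 1); (false, Posz 1)], JB [:: (false, Posz 1); (true, Negz 1); (false, Posz 1)] (Posz 0) (Posz 0));
  ([:: (false, Posz 1); (true, Negz 1); (false, Posz 2)], JB [:: (false, Posz 1); (true, Negz 1); (false, Posz 2)] (Posz 0) (Posz 0));
  ([:: (false, Negz 2); (true, Negz 1); (false, Posz 1)], JW 1 (Negz 0) (27, Posz 0, Negz 0) (4, Posz 0, Posz 0) (28, Posz 1, Negz 2) (29, Posz 1, Negz 0) (30, Posz 1, Negz 0));
  ([:: (false, Negz 1); (true, Posz 1); (false, Negz 1)], JR (31, Posz 0, Posz 1));
  ([:: (false, Negz 1); (true, Posz 1); (false, Negz 0)], JR (27, Posz 0, Posz 0));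
  ([:: (false, Negz 1); (true, Posz 1); (false, Posz 0)], JR (4, Posz 0, Posz 1));
  ([:: (false, Negz 1); (true, Posz 1); (false, Posz 1)], JR (28, Posz 1, Negz 1));
  ([:: (false, Negz 1); (true, Posz 1); (false, Posz 2)], JR (29, Posz 1, Posz 0));
  ([:: (false, Negz 1); (true, Posz 2); (false, Negz 1)], JB [:: (false, Negz 1); (true, Posz 2); (false, Negz 1)] (Posz 0) (Posz 0));
  ([:: (false, Negz 1); (true, Posz 2); (false, Negz 1)], JR (37, Posz 0, Posz 0));
  ([:: (false, Negz 0); (true, Posz 2); (false, Negz 1)], JB [:: (false, Negz 0); (true, Posz 2); (false, Negz 1)] (Posz 0) (Posz 0));
  ([:: (false, Negz 1); (true, Negz 2); (false, Negz 0)], JW 0 (Negz 0) (7, Posz 1, Posz 0) (3, Negz 2, Posz 0) (21, Negz 0, Posz 1) (10, Negz 0, Posz 1) (39, Negz 0, Posz 1));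
  ([:: (false, Negz 1); (true, Posz 2); (false, Negz 0)], JW 1 (Negz 2) (40, Posz 0, Posz 0) (7, Posz 0, Posz 1) (3, Negz 0, Negz 1) (21, Posz 0, Posz 0) (27, Posz 0, Posz 0));
  ([:: (false, Negz 1); (true, Posz 2); (false, Negz 0)], JR (41, Posz 0, Posz 0));
  ([:: (false, Negz 1); (true, Posz 2); (false, Posz 0)], JR (4, Posz 0, Posz 2));
  ([:: (false, Posz 1); (true, Negz 0); (false, Posz 1)], JB [:: (false, Posz 1); (true, Negz 0); (false, Posz 1)] (Posz 0) (Posz 0));
  ([:: (false, Negz 1); (true, Posz 2); (false, Posz 1)], JR (44, Posz 1, Negz 0));
  ([:: (false, Posz 2); (true, Posz 2); (false, Negz 1)], JB [:: (false, Posz 2); (true, Posz 2); (false, Negz 1)] (Posz 0) (Posz 0));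
  ([:: (false, Negz 1); (true, Posz 2); (false, Posz 2)], JR (46, Posz 1, Negz 0));
  ([:: (false, Negz 0); (true, Negz 1); (false, Negz 1)], JR (7, Posz 2, Negz 0));
  ([:: (false, Negz 0); (true, Negz 1); (false, Negz 0)], JR (2, Negz 7, Posz 8));
  ([:: (false, Negz 0); (true, Negz 1); (false, Posz 0)], JR (3, Posz 0, Negz 1));
  ([:: (false, Negz 0); (true, Negz 1); (false, Posz 1)], JR (4, Posz 1, Negz 0));
  ([:: (false, Negz 0); (true, Negz 1); (false, Posz 2)], JR (5, Posz 1, Negz 0));
  ([:: (false, Negz 0); (true, Negz 0); (false, Negz 1)], JR (3, Negz 1, Negz 0));
  ([:: (false, Negz 0); (true, Negz 0); (false, Negz 0)], JR (3, Negz 0, Negz 0));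
  ([:: (false, Negz 0); (true, Negz 0); (false, Posz 0)], JR (3, Posz 0, Negz 0));
  ([:: (false, Negz 0); (true, Negz 0); (false, Posz 1)], JR (3, Posz 1, Negz 0));
  ([:: (false, Negz 0); (true, Negz 0); (false, Posz 2)], JR (3, Posz 2, Negz 0));
  ([:: (false, Negz 0); (true, Posz 0); (false, Negz 1)], JR (21, Posz 0, Posz 0));
  ([:: (false, Negz 0); (true, Posz 0); (false, Negz 0)], JR (4, Posz 0, Posz 0));
  ([:: (false, Negz 0); (true, Posz 0); (false, Posz 0)], JR (3, Posz 0, Posz 0));
  ([:: (false, Negz 0); (true, Posz 0); (false, Posz 1)], JR (25, Negz 7, Posz 8));
  ([:: (false, Negz 0); (true, Posz 0); (false, Posz 2)], JR (28, Posz 0, Posz 0));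
  ([:: (false, Negz 0); (true, Posz 1); (false, Negz 1)], JR (10, Posz 0, Posz 0));
  ([:: (false, Negz 0); (true, Posz 1); (false, Negz 0)], JR (5, Posz 0, Posz 0));
  ([:: (false, Negz 0); (true, Posz 1); (false, Posz 0)], JR (3, Posz 0, Posz 1));
  ([:: (false, Negz 0); (true, Posz 1); (false, Posz 1)], JR (28, Posz 1, Negz 0));
  ([:: (false, Negz 0); (true, Posz 1); (false, Posz 2)], JR (44, Posz 1, Posz 0));
  ([:: (false, Negz 0); (true, Posz 2); (false, Negz 1)], JR (39, Posz 0, Posz 0));
  ([:: (false, Negz 0); (true, Posz 2); (false, Negz 0)], JR (6, Posz 0, Posz 0));
  ([:: (false, Negz 0); (true, Posz 2); (false, Posz 0)], JR (3, Posz 0, Posz 2));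
  ([:: (false, Posz 2)], JB [:: (false, Posz 2)] (Posz 0) (Posz 0));
  ([:: (false, Negz 0); (true, Posz 2); (false, Posz 1)], JR (71, Posz 1, Negz 0));
  ([:: (false, Negz 4); (true, Posz 1); (false, Negz 0)], JW 0 (Negz 1) (27, Posz 0, Posz 0) (5, Posz 0, Posz 0) (3, Posz 1, Posz 0) (28, Negz 0, Posz 1) (44, Posz 0, Posz 1));
  ([:: (false, Negz 4); (true, Negz 0); (false, Posz 1)], JW 0 (Negz 2) (27, Posz 0, Negz 0) (5, Posz 0, Negz 0) (3, Posz 1, Negz 0) (28, Negz 0, Posz 0) (44, Posz 0, Posz 0));
  ([:: (false, Negz 3); (true, Negz 0); (false, Posz 1)], JW 0 (Negz 2) (27, Posz 0, Negz 0) (5, Posz 0, Negz 0) (3, Posz 1, Negz 0) (28, Negz 0, Posz 0) (44, Posz 0, Posz 0));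
  ([:: (false, Negz 0); (true, Posz 2); (false, Posz 2)], JW 1 (Negz 5) (73, Posz 1, Negz 0) (74, Posz 1, Posz 0) (75, Posz 1, Posz 0) (27, Posz 1, Negz 0) (5, Posz 1, Negz 0));
  ([:: (false, Negz 0); (true, Posz 2); (false, Posz 2)], JR (76, Posz 0, Posz 0));
  ([:: (false, Posz 0); (true, Negz 1); (false, Negz 1)], JR (4, Negz 1, Posz 0));
  ([:: (false, Posz 0); (true, Negz 1); (false, Negz 0)], JR (3, Negz 1, Posz 0));
  ([:: (false, Posz 0); (true, Negz 1); (false, Posz 0)], JR (25, Negz 7, Posz 6));
  ([:: (false, Posz 0); (true, Negz 1); (false, Posz 1)], JR (28, Negz 1, Posz 0));
  ([:: (false, Posz 0); (true, Negz 1); (false, Posz 2)], JR (71, Negz 1, Posz 0));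
  ([:: (false, Posz 0); (true, Negz 0); (false, Negz 1)], JR (4, Negz 0, Posz 0));
  ([:: (false, Posz 0); (true, Negz 0); (false, Negz 0)], JR (3, Negz 0, Posz 0));
  ([:: (false, Posz 0); (true, Negz 0); (false, Posz 0)], JR (25, Negz 7, Posz 7));
  ([:: (false, Posz 0); (true, Negz 0); (false, Posz 1)], JR (28, Negz 0, Posz 0));
  ([:: (false, Posz 0); (true, Negz 0); (false, Posz 2)], JR (71, Negz 0, Posz 0));
  ([:: (false, Posz 0); (true, Posz 0); (false, Negz 1)], JR (4, Posz 0, Posz 0));
  ([:: (false, Posz 0); (true, Posz 0); (false, Negz 0)], JR (3, Posz 0, Posz 0));
  ([:: (false, Posz 0); (true, Posz 0); (false, Posz 0)], JR (25, Negz 7, Posz 8));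
  ([:: (false, Posz 0); (true, Posz 0); (false, Posz 1)], JR (28, Posz 0, Posz 0));
  ([:: (false, Posz 0); (true, Posz 0); (false, Posz 2)], JR (71, Posz 0, Posz 0));
  ([:: (false, Posz 0); (true, Posz 1); (false, Negz 1)], JR (4, Posz 1, Posz 0));
  ([:: (false, Posz 0); (true, Posz 1); (false, Negz 0)], JR (3, Posz 1, Posz 0));
  ([:: (false, Posz 0); (true, Posz 1); (false, Posz 0)], JR (25, Negz 6, Posz 8));
  ([:: (false, Posz 0); (true, Posz 1); (false, Posz 1)], JR (28, Posz 1, Posz 0));
  ([:: (false, Posz 0); (true, Posz 1); (false, Posz 2)], JR (71, Posz 1, Posz 0));
  ([:: (false, Posz 0); (true, Posz 2); (false, Negz 1)], JR (4, Posz 2, Posz 0));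
  ([:: (false, Posz 0); (true, Posz 2); (false, Negz 0)], JR (3, Posz 2, Posz 0));
  ([:: (false, Posz 0); (true, Posz 2); (false, Posz 0)], JR (25, Negz 5, Posz 8));
  ([:: (false, Posz 0); (true, Posz 2); (false, Posz 1)], JR (28, Posz 2, Posz 0));
  ([:: (false, Posz 0); (true, Posz 2); (false, Posz 2)], JR (71, Posz 2, Posz 0));
  ([:: (false, Posz 1); (true, Negz 1); (false, Negz 1)], JR (27, Negz 0, Posz 0));
  ([:: (false, Posz 1); (true, Negz 1); (false, Negz 0)], JR (4, Negz 0, Posz 1));
  ([:: (false, Posz 1); (true, Negz 1); (false, Posz 0)], JR (28, Posz 0, Negz 1));
  ([:: (false, Posz 1); (true, Negz 1); (false, Posz 1)], JR (29, Posz 0, Posz 0));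
  ([:: (false, Posz 1); (true, Negz 1); (false, Posz 2)], JR (30, Posz 0, Posz 0));
  ([:: (false, Posz 1); (true, Negz 0); (false, Negz 1)], JR (5, Negz 0, Posz 0));
  ([:: (false, Posz 1); (true, Negz 0); (false, Negz 0)], JR (3, Negz 0, Posz 1));
  ([:: (false, Posz 1); (true, Negz 0); (false, Posz 0)], JR (28, Posz 0, Negz 0));
  ([:: (false, Posz 1); (true, Negz 0); (false, Posz 1)], JR (44, Posz 0, Posz 0));
  ([:: (false, Negz 1); (true, Negz 4); (false, Posz 1)], JW 1 (Negz 1) (10, Posz 0, Negz 0) (5, Posz 0, Negz 0) (3, Posz 0, Posz 0) (28, Posz 1, Negz 1) (44, Posz 1, Negz 0));
  ([:: (false, Negz 1); (true, Negz 3); (false, Posz 1)], JW 1 (Negz 1) (10, Posz 0, Negz 0) (5, Posz 0, Negz 0) (3, Posz 0, Posz 0) (28, Posz 1, Negz 1) (44, Posz 1, Negz 0));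
  ([:: (false, Negz 1); (true, Negz 2); (false, Posz 1)], JW 1 (Negz 1) (10, Posz 0, Negz 0) (5, Posz 0, Negz 0) (3, Posz 0, Posz 0) (28, Posz 1, Negz 1) (44, Posz 1, Negz 0));
  ([:: (false, Negz 1); (true, Posz 3); (false, Posz 1)], JW 1 (Negz 4) (112, Posz 0, Posz 0) (113, Posz 0, Posz 0) (114, Posz 0, Posz 0) (10, Posz 0, Negz 0) (5, Posz 0, Negz 0));
  ([:: (false, Posz 1); (true, Negz 0); (false, Posz 2)], JR (115, Negz 0, Posz 1));
  ([:: (false, Posz 1); (true, Posz 0); (false, Negz 1)], JR (3, Posz 0, Posz 0));
  ([:: (false, Posz 1); (true, Posz 0); (false, Negz 0)], JR (25, Negz 7, Posz 8));
  ([:: (false, Posz 1); (true, Posz 0); (false, Posz 0)], JR (28, Posz 0, Posz 0));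
  ([:: (false, Posz 1); (true, Posz 0); (false, Posz 1)], JR (71, Posz 0, Posz 0));
  ([:: (false, Posz 3)], JB [:: (false, Posz 3)] (Posz 0) (Posz 0));
  ([:: (false, Posz 1); (true, Posz 0); (false, Posz 2)], JR (121, Posz 0, Posz 0));
  ([:: (false, Posz 1); (true, Posz 1); (false, Negz 1)], JR (28, Negz 1, Posz 1));
  ([:: (false, Posz 1); (true, Posz 1); (false, Negz 0)], JR (28, Negz 0, Posz 1));
  ([:: (false, Posz 1); (true, Posz 1); (false, Posz 0)], JR (28, Posz 0, Posz 1));
  ([:: (false, Posz 1); (true, Posz 1); (false, Posz 1)], JR (28, Posz 1, Posz 1));
  ([:: (false, Posz 1); (true, Posz 1); (false, Posz 2)], JR (28, Posz 2, Posz 1));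
  ([:: (false, Posz 1); (true, Posz 2); (false, Negz 1)], JR (44, Negz 0, Posz 1));
  ([:: (false, Posz 1); (true, Posz 2); (false, Negz 0)], JR (71, Negz 0, Posz 1));
  ([:: (false, Posz 1); (true, Posz 2); (false, Posz 0)], JR (28, Posz 0, Posz 2));
  ([:: (false, Posz 1); (true, Posz 2); (false, Posz 1)], JB [:: (false, Posz 1); (true, Posz 2); (false, Posz 1)] (Posz 0) (Posz 0));
  ([:: (false, Posz 1); (true, Posz 2); (false, Posz 1)], JR (131, Negz 7, Posz 8));
  ([:: (false, Negz 2); (true, Posz 1); (false, Negz 1)], JW 0 (Negz 1) (31, Posz 0, Posz 1) (10, Posz 0, Posz 0) (4, Posz 1, Posz 0) (28, Negz 1, Posz 1) (29, Posz 0, Posz 1));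
  ([:: (false, Negz 3); (true, Posz 2); (false, Posz 1)], JW 0 (Negz 2) (29, Posz 1, Negz 0) (44, Posz 1, Negz 0) (71, Posz 1, Negz 0) (28, Posz 2, Posz 0) (131, Negz 7, Posz 8));
  ([:: (false, Negz 2); (true, Posz 1); (false, Posz 3)], JW 2 (Negz 1) (133, Posz 0, Posz 0) (75, Posz 0, Posz 1) (21, Posz 0, Posz 1) (28, Posz 1, Negz 2) (134, Posz 0, Posz 1));
  ([:: (false, Posz 1); (true, Negz 4); (false, Posz 2)], JW 1 (Negz 2) (135, Negz 0, Posz 0) (30, Posz 0, Posz 0) (115, Negz 0, Posz 1) (121, Posz 0, Posz 0) (28, Posz 2, Posz 1));
  ([:: (false, Posz 1); (true, Negz 3); (false, Posz 2)], JW 1 (Negz 2) (135, Negz 0, Posz 0) (30, Posz 0, Posz 0) (115, Negz 0, Posz 1) (121, Posz 0, Posz 0) (28, Posz 2, Posz 1));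
  ([:: (false, Posz 1); (true, Posz 2); (false, Posz 2)], JW 1 (Negz 4) (136, Posz 0, Posz 0) (137, Posz 0, Posz 0) (135, Negz 0, Posz 0) (30, Posz 0, Posz 0) (115, Negz 0, Posz 1));
  ([:: (false, Posz 1); (true, Posz 2); (false, Posz 2)], JR (138, Posz 0, Posz 0));
  ([:: (false, Posz 2); (true, Negz 1); (false, Negz 1)], JR (12, Negz 0, Posz 1));
  ([:: (false, Posz 2); (true, Negz 1); (false, Negz 0)], JR (5, Negz 0, Posz 1));
  ([:: (false, Posz 2); (true, Negz 1); (false, Posz 0)], JR (71, Posz 0, Negz 1));
  ([:: (false, Posz 1); (true, Negz 4); (false, Negz 2)], JW 1 (Negz 2) (133, Negz 0, Posz 0) (31, Negz 0, Posz 1) (10, Negz 0, Posz 0) (4, Posz 0, Posz 0) (28, Negz 2, Posz 1));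
  ([:: (false, Posz 1); (true, Negz 3); (false, Negz 2)], JW 1 (Negz 2) (133, Negz 0, Posz 0) (31, Negz 0, Posz 1) (10, Negz 0, Posz 0) (4, Posz 0, Posz 0) (28, Negz 2, Posz 1));
  ([:: (false, Posz 1); (true, Posz 3); (false, Negz 2)], JW 1 (Negz 4) (143, Posz 0, Posz 0) (144, Posz 0, Posz 0) (133, Negz 0, Posz 0) (31, Negz 0, Posz 1) (10, Negz 0, Posz 0));
  ([:: (false, Posz 2); (true, Negz 1); (false, Posz 1)], JR (145, Posz 1, Negz 0));
  ([:: (false, Posz 2); (true, Negz 1); (false, Posz 2)], JB [:: (false, Posz 2); (true, Negz 1); (false, Posz 2)] (Posz 0) (Posz 0));
  ([:: (false, Posz 2); (true, Negz 1); (false, Posz 2)], JR (147, Posz 0, Posz 0));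
  ([:: (false, Posz 2); (true, Negz 0); (false, Negz 1)], JR (6, Negz 0, Posz 0));
  ([:: (false, Posz 2); (true, Negz 0); (false, Negz 0)], JR (3, Negz 0, Posz 2));
  ([:: (false, Posz 2); (true, Negz 0); (false, Posz 0)], JR (71, Posz 0, Negz 0));
  ([:: (false, Posz 2); (true, Negz 0); (false, Posz 1)], JR (76, Negz 0, Posz 0));
  ([:: (false, Negz 0); (true, Negz 4); (false, Posz 3)], JW 1 (Negz 2) (41, Posz 1, Negz 0) (6, Posz 1, Negz 0) (3, Posz 3, Negz 0) (71, Posz 0, Posz 0) (115, Posz 0, Posz 1));
  ([:: (false, Negz 0); (true, Negz 3); (false, Posz 3)], JW 1 (Negz 2) (41, Posz 1, Negz 0) (6, Posz 1, Negz 0) (3, Posz 3, Negz 0) (71, Posz 0, Posz 0) (115, Posz 0, Posz 1));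
  ([:: (false, Negz 0); (true, Posz 2); (false, Posz 3)], JW 1 (Negz 4) (153, Posz 0, Posz 0) (154, Posz 0, Posz 0) (41, Posz 1, Negz 0) (6, Posz 1, Negz 0) (3, Posz 3, Negz 0));
  ([:: (false, Posz 2); (true, Negz 0); (false, Posz 2)], JR (155, Negz 0, Posz 0));
  ([:: (false, Posz 2); (true, Posz 0); (false, Negz 1)], JR (25, Negz 7, Posz 8));
  ([:: (false, Posz 2); (true, Posz 0); (false, Negz 0)], JR (28, Posz 0, Posz 0));
  ([:: (false, Posz 2); (true, Posz 0); (false, Posz 0)], JR (71, Posz 0, Posz 0));
  ([:: (false, Posz 2); (true, Posz 0); (false, Posz 1)], JR (121, Posz 0, Posz 0));
  ([:: (false, Posz 4)], JB [:: (false, Posz 4)] (Posz 0) (Posz 0));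
  ([:: (false, Posz 2); (true, Posz 0); (false, Posz 2)], JR (161, Posz 0, Posz 0));
  ([:: (false, Posz 2); (true, Posz 1); (false, Negz 1)], JR (29, Posz 0, Posz 1));
  ([:: (false, Posz 2); (true, Posz 1); (false, Negz 0)], JR (44, Posz 0, Posz 1));
  ([:: (false, Posz 2); (true, Posz 1); (false, Posz 0)], JR (71, Posz 0, Posz 1));
  ([:: (false, Posz 2); (true, Posz 1); (false, Posz 1)], JR (28, Posz 1, Posz 2));
  ([:: (false, Posz 2); (true, Posz 1); (false, Posz 2)], JR (131, Negz 6, Posz 8));
  ([:: (false, Posz 2); (true, Posz 2); (false, Negz 1)], JR (46, Posz 0, Posz 0));
  ([:: (false, Posz 2); (true, Posz 2); (false, Negz 0)], JR (115, Negz 0, Posz 2));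
  ([:: (false, Posz 2); (true, Posz 2); (false, Posz 0)], JR (71, Posz 0, Posz 2));
  ([:: (false, Posz 2); (true, Posz 2); (false, Posz 1)], JR (138, Posz 2, Negz 1));
  ([:: (false, Posz 2); (true, Posz 2); (false, Posz 2)], JB [:: (false, Posz 2); (true, Posz 2); (false, Posz 2)] (Posz 0) (Posz 0));
  ([:: (false, Posz 2); (true, Posz 2); (false, Posz 2)], JR (172, Posz 0, Posz 0))].
Definition baseU : seq word := [:: [:: (false, Posz 1); (true, Posz 2); (false, Posz 1)]; [:: (false, Negz 0); (true, Negz 1); (false, Negz 0)]; [:: (false, Negz 0); (true, Posz 2); (false, Negz 0)]; [:: (false, Posz 1); (true, Negz 1); (false, Posz 1)]; [:: (false, Posz 2); (true, Posz 2); (false, Posz 2)]; [:: (false, Negz 1); (true, Negz 1); (false, Negz 1)]; [:: (false, Posz 1); (true, Negz 1); (false, Posz 2)]; [:: (false, Negz 0); (true, Posz 2); (false, Negz 1)]; [:: (false, Negz 0); (true, Posz 1); (false, Negz 0)]; [:: (false, Posz 1); (true, Negz 0); (false, Posz 1)]; [:: (false, Negz 1); (true, Negz 1); (false, Posz 2)]; [:: (false, Posz 2); (true, Posz 2); (false, Negz 1)]; [:: (false, Posz 2); (true, Negz 1); (false, Posz 2)]; [:: (false, Negz 1); (true, Posz 2); (false, Negz 1)]; [:: (false, Negz 1); (true, Posz 1); (false, Negz 0)]; [:: (false, Negz 0); (true, Posz 1); (false, Negz 1)]].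
Definition targU : seq word := [:: [:: (false, Negz 1); (true, Negz 1); (false, Negz 1)]; [:: (false, Negz 1); (true, Negz 1); (false, Negz 0)]; [:: (false, Negz 1); (true, Negz 1); (false, Posz 0)]; [:: (false, Negz 1); (true, Negz 1); (false, Posz 1)]; [:: (false, Negz 1); (true, Negz 1); (false, Posz 2)]; [:: (false, Negz 1); (true, Negz 0); (false, Negz 1)]; [:: (false, Negz 1); (true, Negz 0); (false, Negz 0)]; [:: (false, Negz 1); (true, Negz 0); (false, Posz 0)]; [:: (false, Negz 1); (true, Negz 0); (false, Posz 1)]; [:: (false, Negz 1); (true, Negz 0); (false, Posz 2)]; [:: (false, Negz 1); (true, Posz 0); (false, Negz 1)]; [:: (false, Negz 1); (true, Posz 0); (false, Negz 0)]; [:: (false, Negz 1); (true, Posz 0); (false, Posz 0)]; [:: (false, Negz 1); (true, Posz 0); (false, Posz 1)]; [:: (false, Negz 1); (true, Posz 0); (false, Posz 2)]; [:: (false, Negz 1); (true, Posz 1); (false, Negz 1)]; [:: (false, Negz 1); (true, Posz 1); (false, Negz 0)]; [:: (false, Negz 1); (true, Posz 1); (false, Posz 0)]; [:: (false, Negz 1); (true, Posz 1); (false, Posz 1)]; [:: (false, Negz 1); (true, Posz 1); (false, Posz 2)]; [:: (false, Negz 1); (true, Posz 2); (false, Negz 1)]; [:: (false, Negz 1); (true, Posz 2); (false, Negz 0)]; [:: (false, Negz 1); (true, Posz 2); (false, Posz 0)]; [:: (false, Negz 1); (true, Posz 2); (false, Posz 1)]; [:: (false, Negz 1); (true, Posz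 2); (false, Posz 2)]; [:: (false, Negz 0); (true, Negz 1); (false, Negz 1)]; [:: (false, Negz 0); (true, Negz 1); (false, Negz 0)]; [:: (false, Negz 0); (true, Negz 1); (false, Posz 0)]; [:: (false, Negz 0); (true, Negz 1); (false, Posz 1)]; [:: (false, Negz 0); (true, Negz 1); (false, Posz 2)]; [:: (false, Negz 0); (true, Negz 0); (false, Negz 1)]; [:: (false, Negz 0); (true, Negz 0); (false, Negz 0)]; [:: (false, Negz 0); (true, Negz 0); (false, Posz 0)]; [:: (false, Negz 0); (true, Negz 0); (false, Posz 1)]; [:: (false, Negz 0); (true, Negz 0); (false, Posz 2)]; [:: (false, Negz 0); (true, Posz 0); (false, Negz 1)]; [:: (false, Negz 0); (true, Posz 0); (false, Negz 0)]; [:: (false, Negz 0); (true, Posz 0); (false, Posz 0)]; [:: (false, Negz 0); (true, Posz 0); (false, Posz 1)]; [:: (false, Negz 0); (true, Posz 0); (false, Posz 2)]; [:: (false, Negz 0); (true, Posz 1); (false, Negz 1)]; [:: (false, Negz 0); (true, Posz 1); (false, Negz 0)]; [:: (false, Negz 0); (true, Posz 1); (false, Posz 0)]; [:: (false, Negz 0); (true, Posz 1); (false, Posz 1)]; [:: (false, Negz 0); (true, Posz 1); (false, Posz 2)]; [:: (false, Negz 0); (true, Posz 2); (false, Negz 1)]; [:: (false, Negz 0); (true, Posz 2); (false, Negz 0)]; [:: (false, Negz 0); (true, Posz 2); (false, Posz 0)]; [:: (false, Negz 0); (true, Posz 2); (false, Posz 1)]; [:: (false, Negz 0); (true, Posz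 2); (false, Posz 2)]; [:: (false, Posz 0); (true, Negz 1); (false, Negz 1)]; [:: (false, Posz 0); (true, Negz 1); (false, Negz 0)]; [:: (false, Posz 0); (true, Negz 1); (false, Posz 0)]; [:: (false, Posz 0); (true, Negz 1); (false, Posz 1)]; [:: (false, Posz 0); (true, Negz 1); (false, Posz 2)]; [:: (false, Posz 0); (true, Negz 0); (false, Negz 1)]; [:: (false, Posz 0); (true, Negz 0); (false, Negz 0)]; [:: (false, Posz 0); (true, Negz 0); (false, Posz 0)]; [:: (false, Posz 0); (true, Negz 0); (false, Posz 1)]; [:: (false, Posz 0); (true, Negz 0); (false, Posz 2)]; [:: (false, Posz 0); (true, Posz 0); (false, Negz 1)]; [:: (false, Posz 0); (true, Posz 0); (false, Negz 0)]; [:: (false, Posz 0); (true, Posz 0); (false, Posz 0)]; [:: (false, Posz 0); (true, Posz 0); (false, Posz 1)]; [:: (false, Posz 0); (true, Posz 0); (false, Posz 2)]; [:: (false, Posz 0); (true, Posz 1); (false, Negz 1)]; [:: (false, Posz 0); (true, Posz 1); (false, Negz 0)]; [:: (false, Posz 0); (true, Posz 1); (false, Posz 0)]; [:: (false, Posz 0); (true, Posz 1); (false, Posz 1)]; [:: (false, Posz 0); (true, Posz 1); (false, Posz 2)]; [:: (false, Posz 0); (true, Posz 2); (false, Negz 1)]; [:: (false, Posz 0); (true, Posz 2); (false, Negz 0)]; [:: (false, Posz 0); (true, Posz 2); (false, Posz 0)]; [:: (false, Posz 0); (true, Posz 2); (false, Posz 1)]; [:: (false, Posz 0); (true, Posz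 2); (false, Posz 2)]; [:: (false, Posz 1); (true, Negz 1); (false, Negz 1)]; [:: (false, Posz 1); (true, Negz 1); (false, Negz 0)]; [:: (false, Posz 1); (true, Negz 1); (false, Posz 0)]; [:: (false, Posz 1); (true, Negz 1); (false, Posz 1)]; [:: (false, Posz 1); (true, Negz 1); (false, Posz 2)]; [:: (false, Posz 1); (true, Negz 0); (false, Negz 1)]; [:: (false, Posz 1); (true, Negz 0); (false, Negz 0)]; [:: (false, Posz 1); (true, Negz 0); (false, Posz 0)]; [:: (false, Posz 1); (true, Negz 0); (false, Posz 1)]; [:: (false, Posz 1); (true, Negz 0); (false, Posz 2)]; [:: (false, Posz 1); (true, Posz 0); (false, Negz 1)]; [:: (false, Posz 1); (true, Posz 0); (false, Negz 0)]; [:: (false, Posz 1); (true, Posz 0); (false, Posz 0)]; [:: (false, Posz 1); (true, Posz 0); (false, Posz 1)]; [:: (false, Posz 1); (true, Posz 0); (false, Posz 2)]; [:: (false, Posz 1); (true, Posz 1); (false, Negz 1)]; [:: (false, Posz 1); (true, Posz 1); (false, Negz 0)]; [:: (false, Posz 1); (true, Posz 1); (false, Posz 0)]; [:: (false, Posz 1); (true, Posz 1); (false, Posz 1)]; [:: (false, Posz 1); (true, Posz 1); (false, Posz 2)]; [:: (false, Posz 1); (true, Posz 2); (false, Negz 1)]; [:: (false, Posz 1); (true, Posz 2); (false, Negz 0)]; [:: (false, Posz 1); (true, Posz 2); (false, Posz 0)]; [:: (false, Posz 1); (true, Posz 2); (false, Posz 1)]; [:: (false, Posz 1); (true, Posz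 2); (false, Posz 2)]; [:: (false, Posz 2); (true, Negz 1); (false, Negz 1)]; [:: (false, Posz 2); (true, Negz 1); (false, Negz 0)]; [:: (false, Posz 2); (true, Negz 1); (false, Posz 0)]; [:: (false, Posz 2); (true, Negz 1); (false, Posz 1)]; [:: (false, Posz 2); (true, Negz 1); (false, Posz 2)]; [:: (false, Posz 2); (true, Negz 0); (false, Negz 1)]; [:: (false, Posz 2); (true, Negz 0); (false, Negz 0)]; [:: (false, Posz 2); (true, Negz 0); (false, Posz 0)]; [:: (false, Posz 2); (true, Negz 0); (false, Posz 1)]; [:: (false, Posz 2); (true, Negz 0); (false, Posz 2)]; [:: (false, Posz 2); (true, Posz 0); (false, Negz 1)]; [:: (false, Posz 2); (true, Posz 0); (false, Negz 0)]; [:: (false, Posz 2); (true, Posz 0); (false, Posz 0)]; [:: (false, Posz 2); (true, Posz 0); (false, Posz 1)]; [:: (false, Posz 2); (true, Posz 0); (false, Posz 2)]; [:: (false, Posz 2); (true, Posz 1); (false, Negz 1)]; [:: (false, Posz 2); (true, Posz 1); (false, Negz 0)]; [:: (false, Posz 2); (true, Posz 1); (false, Posz 0)]; [:: (false, Posz 2); (true, Posz 1); (false, Posz 1)]; [:: (false, Posz 2); (true, Posz 1); (false, Posz 2)]; [:: (false, Posz 2); (true, Posz 2); (false, Negz 1)]; [:: (false, Posz 2); (true, Posz 2); (false, Negz 0)]; [:: (false, Posz 2); (true, Posz 2); (false, Posz 0)]; [:: (false, Posz 2); (true, Posz 2); (false, Posz 1)]; [:: (false, Posz 2); (true, Posz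 2); (false, Posz 2)]].
Definition famU (w : word) := (match w with [:: (false, _)] => true | _ => false end) || (w \in baseU).
Definition famN (w : word) := false.
Lemma certU_ok : all (fun w => (w, true) \in run famU famN [::] certU) targU.
Proof. vm_compute. reflexivity. Qed.

Definition certT1 : seq (word * just) := [::
  ([:: (false, Negz 0); (true, Negz 1); (false, Negz 1); (true, Negz 1); (false, Negz 0)], JB [:: (false, Negz 0); (true, Negz 1); (false, Negz 1); (true, Negz 1); (false, Negz 0)] (Posz 0) (Posz 0));
  ([:: (false, Negz 2); (true, Negz 0); (false, Negz 1)], JB [:: (false, Negz 2); (true, Negz 0); (false, Negz 1)] (Posz 0) (Posz 0));
  ([:: (false, Negz 3); (true, Negz 0); (false, Negz 1)], JB [:: (false, Negz 3); (true, Negz 0); (false, Negz 1)] (Posz 0) (Posz 0));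
  ([:: (false, Negz 2); (true, Negz 0); (false, Negz 2)], JB [:: (false, Negz 2); (true, Negz 0); (false, Negz 2)] (Posz 0) (Posz 0));
  ([:: (false, Negz 1); (true, Negz 1); (false, Negz 1)], JB [:: (false, Negz 1); (true, Negz 1); (false, Negz 1)] (Posz 0) (Posz 0));
  ([:: (false, Negz 2); (true, Negz 1); (false, Negz 2); (true, Negz 0); (false, Negz 1)], JW 0 (Negz 0) (0, Negz 7, Posz 7) (1, Negz 1, Posz 0) (2, Negz 0, Posz 1) (3, Negz 0, Posz 2) (4, Negz 0, Posz 2));
  ([:: (false, Negz 2); (true, Negz 0); (false, Negz 2); (true, Negz 1); (false, Negz 0)], JW 0 (Negz 1) (0, Negz 7, Posz 7) (1, Negz 1, Posz 0) (2, Negz 0, Posz 1) (3, Negz 0, Posz 2) (4, Negz 0, Posz 2));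
  ([:: (false, Negz 2); (true, Negz 0); (false, Negz 2); (true, Negz 0); (false, Posz 2)], JW 4 (Negz 4) (5, Posz 1, Negz 2) (6, Posz 1, Negz 2) (0, Negz 7, Posz 5) (1, Negz 0, Negz 2) (2, Posz 0, Negz 1));
  ([:: (false, Negz 1); (true, Negz 1); (false, Negz 0); (true, Posz 1); (false, Negz 0)], JR (7, Posz 0, Posz 1));
  ([:: (false, Negz 6); (true, Negz 0); (false, Negz 0)], JB [:: (false, Negz 6); (true, Negz 0); (false, Negz 0)] (Posz 0) (Posz 0));
  ([:: (false, Negz 1); (true, Negz 0); (false, Negz 0); (true, Posz 1); (false, Negz 0)], JR (9, Negz 0, Posz 6));
  ([:: (false, Negz 3); (true, Negz 0); (false, Posz 1)], JB [:: (false, Negz 3); (true, Negz 0); (false, Posz 1)] (Posz 0) (Posz 0));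
  ([:: (false, Negz 1); (true, Posz 0); (false, Negz 0); (true, Posz 1); (false, Negz 0)], JR (11, Posz 0, Posz 1));
  ([:: (false, Negz 2); (true, Negz 1); (false, Posz 2)], JB [:: (false, Negz 2); (true, Negz 1); (false, Posz 2)] (Posz 0) (Posz 0));
  ([:: (false, Negz 1); (true, Posz 1); (false, Negz 0); (true, Posz 1); (false, Negz 0)], JR (13, Posz 0, Posz 1));
  ([:: (false, Negz 1); (true, Posz 2); (false, Negz 0); (true, Posz 1); (false, Negz 0)], JE [:: (false, Negz 1); (true, Posz 2); (false, Negz 0); (true, Posz 1); (false, Negz 0)]);
  ([:: (false, Negz 1); (true, Posz 2); (false, Negz 0); (true, Posz 1); (false, Negz 0)], JR (15, Posz 0, Posz 0));
  ([:: (false, Negz 0); (true, Negz 1); (false, Negz 0); (true, Posz 1); (false, Negz 0)], JR (1, Posz 3, Negz 0));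
  ([:: (false, Negz 6); (true, Posz 0); (false, Posz 5)], JB [:: (false, Negz 6); (true, Posz 0); (false, Posz 5)] (Posz 0) (Posz 0));
  ([:: (false, Negz 0); (true, Negz 0); (false, Negz 0); (true, Posz 1); (false, Negz 0)], JR (18, Negz 0, Posz 0));
  ([:: (false, Negz 2); (true, Negz 0); (false, Posz 1)], JB [:: (false, Negz 2); (true, Negz 0); (false, Posz 1)] (Posz 0) (Posz 0));
  ([:: (false, Negz 0); (true, Posz 0); (false, Negz 0); (true, Posz 1); (false, Negz 0)], JR (20, Posz 0, Posz 1));
  ([:: (false, Negz 1); (true, Negz 1); (false, Posz 2)], JB [:: (false, Negz 1); (true, Negz 1); (false, Posz 2)] (Posz 0) (Posz 0));
  ([:: (false, Negz 0); (true, Posz 1); (false, Negz 0); (true, Posz 1); (false, Negz 0)], JR (22, Posz 0, Posz 1));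
  ([:: (false, Posz 3); (true, Negz 1); (false, Negz 1)], JB [:: (false, Posz 3); (true, Negz 1); (false, Negz 1)] (Posz 0) (Posz 0));
  ([:: (false, Negz 0); (true, Posz 2); (false, Negz 0); (true, Posz 1); (false, Negz 0)], JR (24, Posz 1, Posz 0));
  ([:: (false, Negz 1); (true, Negz 0); (false, Posz 1)], JB [:: (false, Negz 1); (true, Negz 0); (false, Posz 1)] (Posz 0) (Posz 0));
  ([:: (false, Posz 0); (true, Negz 1); (false, Negz 0); (true, Posz 1); (false, Negz 0)], JR (26, Negz 1, Posz 1));
  ([:: (false, Posz 0); (true, Negz 0); (false, Negz 0); (true, Posz 1); (false, Negz 0)], JR (26, Negz 0, Posz 1));
  ([:: (false, Posz 0); (true, Posz 0); (false, Negz 0); (true, Posz 1); (false, Negz 0)], JR (26, Posz 0, Posz 1));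
  ([:: (false, Posz 0); (true, Posz 1); (false, Negz 0); (true, Posz 1); (false, Negz 0)], JR (26, Posz 1, Posz 1));
  ([:: (false, Posz 0); (true, Posz 2); (false, Negz 0); (true, Posz 1); (false, Negz 0)], JR (26, Posz 2, Posz 1));
  ([:: (false, Negz 2); (true, Negz 0); (false, Posz 2)], JB [:: (false, Negz 2); (true, Negz 0); (false, Posz 2)] (Posz 0) (Posz 0));
  ([:: (false, Posz 1); (true, Negz 1); (false, Negz 0); (true, Posz 1); (false, Negz 0)], JR (32, Negz 0, Posz 1));
  ([:: (false, Negz 1); (true, Negz 0); (false, Posz 2)], JB [:: (false, Negz 1); (true, Negz 0); (false, Posz 2)] (Posz 0) (Posz 0));
  ([:: (false, Posz 1); (true, Negz 0); (false, Negz 0); (true, Posz 1); (false, Negz 0)], JR (34, Negz 0, Posz 1));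
  ([:: (false, Posz 1); (true, Posz 0); (false, Negz 0); (true, Posz 1); (false, Negz 0)], JR (9, Posz 2, Posz 7));
  ([:: (false, Negz 4); (true, Posz 0); (false, Posz 7)], JB [:: (false, Negz 4); (true, Posz 0); (false, Posz 7)] (Posz 0) (Posz 0));
  ([:: (false, Posz 1); (true, Posz 1); (false, Negz 0); (true, Posz 1); (false, Negz 0)], JR (37, Negz 1, Posz 1));
  ([:: (false, Negz 1); (true, Posz 3); (false, Posz 1)], JB [:: (false, Negz 1); (true, Posz 3); (false, Posz 1)] (Posz 0) (Posz 0));
  ([:: (false, Posz 1); (true, Posz 2); (false, Negz 0); (true, Posz 1); (false, Negz 0)], JR (39, Negz 1, Posz 2));
  ([:: (false, Negz 1); (true, Negz 1); (false, Posz 3)], JB [:: (false, Negz 1); (true, Negz 1); (false, Posz 3)] (Posz 0) (Posz 0));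
  ([:: (false, Posz 2); (true, Negz 1); (false, Negz 0); (true, Posz 1); (false, Negz 0)], JR (41, Negz 0, Posz 1));
  ([:: (false, Negz 1); (true, Negz 0); (false, Posz 3)], JB [:: (false, Negz 1); (true, Negz 0); (false, Posz 3)] (Posz 0) (Posz 0));
  ([:: (false, Posz 2); (true, Negz 0); (false, Negz 0); (true, Posz 1); (false, Negz 0)], JR (43, Negz 0, Posz 1));
  ([:: (false, Negz 6); (true, Posz 1); (false, Posz 1)], JB [:: (false, Negz 6); (true, Posz 1); (false, Posz 1)] (Posz 0) (Posz 0));
  ([:: (false, Posz 2); (true, Posz 0); (false, Negz 0); (true, Posz 1); (false, Negz 0)], JR (45, Negz 1, Posz 8));
  ([:: (false, Negz 2); (true, Posz 3); (false, Posz 1)], JB [:: (false, Negz 2); (true, Posz 3); (false, Posz 1)] (Posz 0) (Posz 0));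
  ([:: (false, Posz 2); (true, Posz 1); (false, Negz 0); (true, Posz 1); (false, Negz 0)], JR (47, Negz 0, Posz 2));
  ([:: (false, Negz 1); (true, Posz 2); (false, Posz 3)], JB [:: (false, Negz 1); (true, Posz 2); (false, Posz 3)] (Posz 0) (Posz 0));
  ([:: (false, Posz 2); (true, Posz 2); (false, Negz 0); (true, Posz 1); (false, Negz 0)], JR (49, Negz 0, Posz 1))].
Definition targT1 : seq word := [:: [:: (false, Negz 1); (true, Negz 1); (false, Negz 0); (true, Posz 1); (false, Negz 0)]; [:: (false, Negz 1); (true, Negz 0); (false, Negz 0); (true, Posz 1); (false, Negz 0)]; [:: (false, Negz 1); (true, Posz 0); (false, Negz 0); (true, Posz 1); (false, Negz 0)]; [:: (false, Negz 1); (true, Posz 1); (false, Negz 0); (true, Posz 1); (false, Negz 0)]; [:: (false, Negz 1); (true, Posz 2); (false, Negz 0); (true, Posz 1); (false, Negz 0)]; [:: (false, Negz 0); (true, Negz 1); (false, Negz 0); (true, Posz 1); (false, Negz 0)]; [:: (false, Negz 0); (true, Negz 0); (false, Negz 0); (true, Posz 1); (false, Negz 0)]; [:: (false, Negz 0); (true, Posz 0); (false, Negz 0); (true, Posz 1); (false, Negz 0)]; [:: (false, Negz 0); (true, Posz 1); (false, Negz 0); (true, Posz 1); (false, Negz 0)]; [:: (false, Negz 0); (true, Posz 2); (false, Negz 0); (true, Posz 1); (false, Negz 0)]; [:: (false, Posz 0); (true, Negz 1); (false, Negz 0); (true, Posz 1); (false, Negz 0)]; [:: (false, Posz 0); (true,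 Negz 0); (false, Negz 0); (true, Posz 1); (false, Negz 0)]; [:: (false, Posz 0); (true, Posz 0); (false, Negz 0); (true, Posz 1); (false, Negz 0)]; [:: (false, Posz 0); (true, Posz 1); (false, Negz 0); (true, Posz 1); (false, Negz 0)]; [:: (false, Posz 0); (true, Posz 2); (false, Negz 0); (true, Posz 1); (false, Negz 0)]; [:: (false, Posz 1); (true, Negz 1); (false, Negz 0); (true, Posz 1); (false, Negz 0)]; [:: (false, Posz 1); (true, Negz 0); (false, Negz 0); (true, Posz 1); (false, Negz 0)]; [:: (false, Posz 1); (true, Posz 0); (false, Negz 0); (true, Posz 1); (false, Negz 0)]; [:: (false, Posz 1); (true, Posz 1); (false, Negz 0); (true, Posz 1); (false, Negz 0)]; [:: (false, Posz 1); (true, Posz 2); (false, Negz 0); (true, Posz 1); (false, Negz 0)]; [:: (false, Posz 2); (true, Negz 1); (false, Negz 0); (true, Posz 1); (false, Negz 0)]; [:: (false, Posz 2); (true, Negz 0); (false, Negz 0); (true, Posz 1); (false, Negz 0)]; [:: (false, Posz 2); (true, Posz 0); (false, Negz 0); (true, Posz 1); (false, Negz 0)]; [:: (false, Posz 2); (true, Posz 1); (false, Negz 0); (true, Posz 1); (false, Negz 0)]; [:: (false, Posz 2); (true, Posz 2); (false, Negz 0); (true, Posz 1); (false, Negz 0)]].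
Definition om2T1 : word := [:: (false, Negz 0); (true, Negz 1); (false, Negz 1); (true, Negz 1); (false, Negz 0)].
Definition xT1 : word := [:: (false, Negz 1); (true, Posz 2); (false, Negz 0); (true, Posz 1); (false, Negz 0)].
Definition certT2 : seq (word * just) := [::
  ([:: (false, Posz 2); (true, Negz 1); (false, Negz 2)], JB [:: (false, Posz 2); (true, Negz 1); (false, Negz 2)] (Posz 0) (Posz 0));
  ([:: (false, Negz 1); (true, Negz 1); (false, Posz 1); (true, Negz 0); (false, Posz 1)], JR (0, Posz 1, Negz 0));
  ([:: (false, Negz 0); (true, Posz 2); (false, Negz 1)], JB [:: (false, Negz 0); (true, Posz 2); (false, Negz 1)] (Posz 0) (Posz 0));
  ([:: (false, Negz 1); (true, Negz 0); (false, Posz 1); (true, Negz 0); (false, Posz 1)], JR (2, Posz 0, Negz 0));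
  ([:: (false, Negz 6); (true, Negz 0); (false, Negz 0)], JB [:: (false, Negz 6); (true, Negz 0); (false, Negz 0)] (Posz 0) (Posz 0));
  ([:: (false, Negz 1); (true, Posz 0); (false, Posz 1); (true, Negz 0); (false, Posz 1)], JR (4, Posz 2, Posz 6));
  ([:: (false, Negz 3); (true, Posz 2); (false, Posz 1)], JB [:: (false, Negz 3); (true, Posz 2); (false, Posz 1)] (Posz 0) (Posz 0));
  ([:: (false, Negz 1); (true, Posz 1); (false, Posz 1); (true, Negz 0); (false, Posz 1)], JR (6, Posz 0, Posz 1));
  ([:: (false, Posz 2); (true, Posz 2); (false, Negz 2)], JB [:: (false, Posz 2); (true, Posz 2); (false, Negz 2)] (Posz 0) (Posz 0));
  ([:: (false, Negz 1); (true, Posz 2); (false, Posz 1); (true, Negz 0); (false, Posz 1)], JR (8, Posz 1, Negz 0));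
  ([:: (false, Negz 1); (true, Negz 1); (false, Posz 1)], JB [:: (false, Negz 1); (true, Negz 1); (false, Posz 1)] (Posz 0) (Posz 0));
  ([:: (false, Negz 0); (true, Negz 1); (false, Posz 1); (true, Negz 0); (false, Posz 1)], JR (10, Posz 1, Posz 0));
  ([:: (false, Negz 6); (true, Posz 0); (false, Posz 5)], JB [:: (false, Negz 6); (true, Posz 0); (false, Posz 5)] (Posz 0) (Posz 0));
  ([:: (false, Negz 0); (true, Negz 0); (false, Posz 1); (true, Negz 0); (false, Posz 1)], JR (12, Posz 2, Negz 0));
  ([:: (false, Negz 6); (true, Posz 1); (false, Posz 1)], JB [:: (false, Negz 6); (true, Posz 1); (false, Posz 1)] (Posz 0) (Posz 0));
  ([:: (false, Negz 0); (true, Posz 0); (false, Posz 1); (true, Negz 0); (false, Posz 1)], JR (14, Negz 1, Posz 7));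
  ([:: (false, Negz 2); (true, Posz 2); (false, Posz 1)], JB [:: (false, Negz 2); (true, Posz 2); (false, Posz 1)] (Posz 0) (Posz 0));
  ([:: (false, Negz 0); (true, Posz 1); (false, Posz 1); (true, Negz 0); (false, Posz 1)], JR (16, Posz 0, Posz 1));
  ([:: (false, Posz 1); (true, Posz 3); (false, Negz 2)], JB [:: (false, Posz 1); (true, Posz 3); (false, Negz 2)] (Posz 0) (Posz 0));
  ([:: (false, Negz 0); (true, Posz 2); (false, Posz 1); (true, Negz 0); (false, Posz 1)], JR (18, Posz 2, Negz 0));
  ([:: (false, Negz 1); (true, Posz 2); (false, Posz 1)], JB [:: (false, Negz 1); (true, Posz 2); (false, Posz 1)] (Posz 0) (Posz 0));
  ([:: (false, Posz 0); (true, Negz 1); (false, Posz 1); (true, Negz 0); (false, Posz 1)], JR (20, Negz 2, Posz 1));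
  ([:: (false, Posz 0); (true, Negz 0); (false, Posz 1); (true, Negz 0); (false, Posz 1)], JR (20, Negz 1, Posz 1));
  ([:: (false, Posz 0); (true, Posz 0); (false, Posz 1); (true, Negz 0); (false, Posz 1)], JR (20, Negz 0, Posz 1));
  ([:: (false, Posz 0); (true, Posz 1); (false, Posz 1); (true, Negz 0); (false, Posz 1)], JR (20, Posz 0, Posz 1));
  ([:: (false, Posz 0); (true, Posz 2); (false, Posz 1); (true, Negz 0); (false, Posz 1)], JR (20, Posz 1, Posz 1));
  ([:: (false, Negz 2); (true, Posz 2); (false, Posz 2)], JB [:: (false, Negz 2); (true, Posz 2); (false, Posz 2)] (Posz 0) (Posz 0));
  ([:: (false, Posz 1); (true, Negz 1); (false, Posz 1); (true, Negz 0); (false, Posz 1)], JR (26, Negz 0, Posz 0));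
  ([:: (false, Negz 1); (true, Posz 2); (false, Posz 2)], JB [:: (false, Negz 1); (true, Posz 2); (false, Posz 2)] (Posz 0) (Posz 0));
  ([:: (false, Posz 1); (true, Negz 0); (false, Posz 1); (true, Negz 0); (false, Posz 1)], JR (28, Negz 0, Posz 0));
  ([:: (false, Negz 0); (true, Posz 2); (false, Posz 2)], JB [:: (false, Negz 0); (true, Posz 2); (false, Posz 2)] (Posz 0) (Posz 0));
  ([:: (false, Posz 1); (true, Posz 0); (false, Posz 1); (true, Negz 0); (false, Posz 1)], JR (30, Negz 0, Posz 0));
  ([:: (false, Negz 4); (true, Posz 0); (false, Posz 7)], JB [:: (false, Negz 4); (true, Posz 0); (false, Posz 7)] (Posz 0) (Posz 0));
  ([:: (false, Posz 1); (true, Posz 1); (false, Posz 1); (true, Negz 0); (false, Posz 1)], JR (32, Posz 1, Posz 0));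
  ([:: (false, Posz 1); (true, Posz 2); (false, Posz 2)], JB [:: (false, Posz 1); (true, Posz 2); (false, Posz 2)] (Posz 0) (Posz 0));
  ([:: (false, Posz 1); (true, Posz 2); (false, Posz 1); (true, Negz 0); (false, Posz 1)], JR (34, Negz 0, Posz 0));
  ([:: (false, Posz 2); (true, Negz 1); (false, Posz 1); (true, Negz 0); (false, Posz 1)], JE [:: (false, Posz 2); (true, Negz 1); (false, Posz 1); (true, Negz 0); (false, Posz 1)]);
  ([:: (false, Posz 2); (true, Negz 1); (false, Posz 1); (true, Negz 0); (false, Posz 1)], JR (36, Posz 0, Posz 0));
  ([:: (false, Posz 3); (true, Posz 2); (false, Negz 1)], JB [:: (false, Posz 3); (true, Posz 2); (false, Negz 1)] (Posz 0) (Posz 0));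
  ([:: (false, Posz 2); (true, Negz 0); (false, Posz 1); (true, Negz 0); (false, Posz 1)], JR (38, Posz 0, Negz 0));
  ([:: (false, Negz 0); (true, Posz 3); (false, Posz 2)], JB [:: (false, Negz 0); (true, Posz 3); (false, Posz 2)] (Posz 0) (Posz 0));
  ([:: (false, Posz 2); (true, Posz 0); (false, Posz 1); (true, Negz 0); (false, Posz 1)], JR (40, Negz 0, Posz 0));
  ([:: (false, Posz 2); (true, Posz 1); (false, Posz 1); (true, Negz 0); (false, Posz 1)], JR (14, Posz 1, Posz 8));
  ([:: (false, Posz 2); (true, Posz 2); (false, Posz 2)], JB [:: (false, Posz 2); (true, Posz 2); (false, Posz 2)] (Posz 0) (Posz 0));
  ([:: (false, Posz 1); (true, Posz 3); (false, Posz 2)], JB [:: (false, Posz 1); (true, Posz 3); (false, Posz 2)] (Posz 0) (Posz 0));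
  ([:: (false, Posz 1); (true, Posz 2); (false, Posz 3)], JB [:: (false, Posz 1); (true, Posz 2); (false, Posz 3)] (Posz 0) (Posz 0));
  ([:: (false, Posz 1); (true, Posz 2); (false, Posz 2); (true, Posz 2); (false, Posz 1)], JB [:: (false, Posz 1); (true, Posz 2); (false, Posz 2); (true, Posz 2); (false, Posz 1)] (Posz 0) (Posz 0));
  ([:: (false, Negz 2); (true, Posz 1); (false, Posz 3); (true, Posz 2); (false, Posz 1)], JW 0 (Negz 1) (43, Posz 1, Negz 1) (44, Posz 2, Negz 1) (45, Posz 3, Negz 1) (34, Posz 4, Negz 0) (46, Negz 6, Posz 8));
  ([:: (false, Posz 2); (true, Posz 2); (false, Posz 1); (true, Negz 0); (false, Posz 1)], JR (47, Negz 0, Posz 2))].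
Definition targT2 : seq word := [:: [:: (false, Negz 1); (true, Negz 1); (false, Posz 1); (true, Negz 0); (false, Posz 1)]; [:: (false, Negz 1); (true, Negz 0); (false, Posz 1); (true, Negz 0); (false, Posz 1)]; [:: (false, Negz 1); (true, Posz 0); (false, Posz 1); (true, Negz 0); (false, Posz 1)]; [:: (false, Negz 1); (true, Posz 1); (false, Posz 1); (true, Negz 0); (false, Posz 1)]; [:: (false, Negz 1); (true, Posz 2); (false, Posz 1); (true, Negz 0); (false, Posz 1)]; [:: (false, Negz 0); (true, Negz 1); (false, Posz 1); (true, Negz 0); (false, Posz 1)]; [:: (false, Negz 0); (true, Negz 0); (false, Posz 1); (true, Negz 0); (false, Posz 1)]; [:: (false, Negz 0); (true, Posz 0); (false, Posz 1); (true, Negz 0); (false, Posz 1)]; [:: (false, Negz 0); (true, Posz 1); (false, Posz 1); (true, Negz 0); (false, Posz 1)]; [:: (false, Negz 0); (true, Posz 2); (false, Posz 1); (true, Negz 0); (false, Posz 1)]; [:: (false, Posz 0); (true, Negz 1); (false, Posz 1); (true, Negz 0); (false, Posz 1)]; [:: (false, Posz 0); (true, Negz 0); (false, Posz 1); (true, Negz 0); (false, Posz 1)]; [:: (false, Posz 0); (true, Posz 0); (false, Posz 1); (true, Negz 0); (false, Posz 1)]; [:: (false, Posz 0); (true, Posz 1); (false, Posz 1); (true, Negz 0); (false, Posz 1)]; [:: (false, Posz 0); (true, Posz 2); (false, Posz 1); (true, Negz 0); (false, Posz 1)]; [:: (false, Posz 1); (true, Negz 1); (false, Posz 1); (true, Negz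 0); (false, Posz 1)]; [:: (false, Posz 1); (true, Negz 0); (false, Posz 1); (true, Negz 0); (false, Posz 1)]; [:: (false, Posz 1); (true, Posz 0); (false, Posz 1); (true, Negz 0); (false, Posz 1)]; [:: (false, Posz 1); (true, Posz 1); (false, Posz 1); (true, Negz 0); (false, Posz 1)]; [:: (false, Posz 1); (true, Posz 2); (false, Posz 1); (true, Negz 0); (false, Posz 1)]; [:: (false, Posz 2); (true, Negz 1); (false, Posz 1); (true, Negz 0); (false, Posz 1)]; [:: (false, Posz 2); (true, Negz 0); (false, Posz 1); (true, Negz 0); (false, Posz 1)]; [:: (false, Posz 2); (true, Posz 0); (false, Posz 1); (true, Negz 0); (false, Posz 1)]; [:: (false, Posz 2); (true, Posz 1); (false, Posz 1); (true, Negz 0); (false, Posz 1)]; [:: (false, Posz 2); (true, Posz 2); (false, Posz 1); (true, Negz 0); (false, Posz 1)]].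
Definition om2T2 : word := [:: (false, Posz 1); (true, Posz 2); (false, Posz 2); (true, Posz 2); (false, Posz 1)].
Definition xT2 : word := [:: (false, Posz 2); (true, Negz 1); (false, Posz 1); (true, Negz 0); (false, Posz 1)].
Definition famTST (w : word) := match w with [:: (false, _); (true, _); (false, _)] => true | _ => false end.
Definition famB1 (w : word) := famTST w || (w == om2T1).
Definition famE1 (w : word) := w == xT1.
Definition famB2 (w : word) := famTST w || (w == om2T2).
Definition famE2 (w : word) := w == xT2.
Lemma certT1_ok : all (fun w => ((w, true) \in run famB1 famE1 [::] certT1) || ((w, false) \in run famB1 famE1 [::] certT1)) targT1.
Proof. vm_compute. reflexivity. Qed.
Lemma certT2_ok : all (fun w => ((w, true) \in run famB2 famE2 [::] certT2) || ((w, false) \in run famB2 famE2 [::] certT2)) targT2.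
Proof. vm_compute. reflexivity. Qed.

Ltac sm := rewrite ?/U'' ?/U' ?/u1xu1 ?/u1x ?/u12121 ?/u1 ?/u2 ?/usub ?/rline ?/mprod;
  repeat first [apply: msum_submod | apply: rspan_submod].

Section MainU.
Variables (R : comUnitRingType) (A : unitAlgType R) (a b c d e : R) (s t : A).
Hypotheses (su : s \is a GRing.unit) (tu : t \is a GRing.unit) (eu : e \is a GRing.unit).
Hypothesis br : s * t * s = t * s * t.
Hypothesis q5s : s ^+ 5 = a *: s ^+ 4 + b *: s ^+ 3 + c *: s ^+ 2 + d *: s + e%:A.
Hypothesis q5t : t ^+ 5 = a *: t ^+ 4 + b *: t ^+ 3 + c *: t ^+ 2 + d *: t + e%:A.

Lemma om_shift (g : A) : GRing.comm g s -> forall i j : int, s ^ i * g * s ^ j = s ^ (i + j) * g.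
Proof.
move=> Hg i j; have Hj := commrXz j Hg.
by rewrite -mulrA Hj mulrA -exprzDr.
Qed.

Lemma omu : omega s t \is a GRing.unit.
Proof. by rewrite /omega !unitrMl // unitrX. Qed.

Lemma om_cs : GRing.comm (omega s t) s.
Proof.
have E := @nf_sound _ _ s t su tu br [:: (false, Posz 1); (true, Posz 2); (false, Posz 1); (true, Posz 1)]
   [:: (true, Posz 1); (false, Posz 1); (true, Posz 2); (false, Posz 1)] (erefl true).
rewrite /interp /isyl /= !mul1r in E; rewrite /GRing.comm /omega (mulrA s (t * s ^+ 2) t) (mulrA s t (s ^+ 2)); exact: E.
Qed.

Lemma inv_eq (u v : A) : v \is a GRing.unit -> u * v = 1 -> u = v^-1.
Proof. by move=> Hv H; rewrite -[u](mulrK Hv) H mul1r. Qed.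

Lemma omi_w : t ^ Negz 0 * s ^ Negz 1 * t ^ Negz 0 = (omega s t)^-1.
Proof.
apply: inv_eq; first exact: omu.
have E := @nf_sound _ _ s t su tu br [:: (false, Negz 0); (true, Negz 1); (false, Negz 0); (false, Posz 1); (true, Posz 2); (false, Posz 1)]
   [::] (erefl true).
by rewrite /interp /isyl /= !mul1r in E; rewrite /omega (mulrA _ (t * s ^+ 2) t) (mulrA _ t (s ^+ 2)); exact: E.
Qed.

Lemma omi_cs : GRing.comm (omega s t)^-1 s.
Proof. by apply/commr_sym; apply: commrV; apply/commr_sym; exact: om_cs. Qed.

Lemma HS_U : submod (U'' s t). Proof. sm. Qed.

Lemma HB_U w : famU w -> Bi s t (U'' s t) w.
Proof.
case/orP => [Hw|].
  case: w Hw => [|[[] k] [|? ?]] //= _ i j; rewrite /interp /= mul1r.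
  apply: msum_l; [sm|]; apply: msum_l; [sm|].
  by apply: mprod_in; [apply: mprod_in|]; first [exact: (usub_int su eu q5s) | exact: (usub_int tu eu q5t)].
move/(nthP [::]) => [k Hk <-].
case: k Hk => [|k] Hk.
{ move=> i j; rewrite /interp /= mul1r.
apply: msum_l; [sm|].
do 1 (apply: msum_r; [sm|]).
apply: msum_l; [sm|].
rewrite (om_shift om_cs); apply: mprod_in; [exact: (usub_int su eu q5s)|exact: rspan_in]. }
case: k Hk => [|k] Hk.
{ move=> i j; rewrite /interp /= mul1r.
apply: msum_l; [sm|].
do 2 (apply: msum_r; [sm|]).
apply: msum_l; [sm|].
rewrite omi_w (om_shift omi_cs); apply: mprod_in; [exact: (usub_int su eu q5s)|exact: rspan_in]. }
case: k Hk => [|k] Hk.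
{ move=> i j; rewrite /interp /= mul1r.
apply: msum_l; [sm|].
do 3 (apply: msum_r; [sm|]).
apply: msum_l; [sm|].
apply: mprod_in; [apply: mprod_in; [exact: (usub_int su eu q5s)|exact: rspan_in]|exact: (usub_int su eu q5s)]. }
case: k Hk => [|k] Hk.
{ move=> i j; rewrite /interp /= mul1r.
apply: msum_l; [sm|].
do 4 (apply: msum_r; [sm|]).
apply: msum_l; [sm|].
apply: mprod_in; [apply: mprod_in; [exact: (usub_int su eu q5s)|exact: rspan_in]|exact: (usub_int su eu q5s)]. }
case: k Hk => [|k] Hk.
{ move=> i j; rewrite /interp /= mul1r.
apply: msum_l; [sm|].
do 5 (apply: msum_r; [sm|]).
apply: msum_l; [sm|].
apply: mprod_in; [apply: mprod_in; [exact: (usub_int su eu q5s)|exact: rspan_in]|exact: (usub_int su eu q5s)]. }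
case: k Hk => [|k] Hk.
{ move=> i j; rewrite /interp /= mul1r.
apply: msum_l; [sm|].
do 6 (apply: msum_r; [sm|]).
apply: msum_l; [sm|].
apply: mprod_in; [apply: mprod_in; [exact: (usub_int su eu q5s)|exact: rspan_in]|exact: (usub_int su eu q5s)]. }
case: k Hk => [|k] Hk.
{ move=> i j; rewrite /interp /= mul1r.
apply: msum_l; [sm|].
do 7 (apply: msum_r; [sm|]).
apply: msum_l; [sm|].
apply: mprod_in; [apply: mprod_in; [exact: (usub_int su eu q5s)|exact: rspan_in]|exact: (usub_int su eu q5s)]. }
case: k Hk => [|k] Hk.
{ move=> i j; rewrite /interp /= mul1r.
apply: msum_l; [sm|].
do 8 (apply: msum_r; [sm|]).
apply: msum_l; [sm|].
apply: mprod_in; [apply: mprod_in; [exact: (usub_int su eu q5s)|exact: rspan_in]|exact: (usub_int su eu q5s)]. }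
case: k Hk => [|k] Hk.
{ move=> i j; rewrite /interp /= mul1r.
apply: msum_l; [sm|].
do 9 (apply: msum_r; [sm|]).
apply: msum_l; [sm|].
apply: mprod_in; [apply: mprod_in; [exact: (usub_int su eu q5s)|exact: rspan_in]|exact: (usub_int su eu q5s)]. }
case: k Hk => [|k] Hk.
{ move=> i j; rewrite /interp /= mul1r.
apply: msum_l; [sm|].
do 10 (apply: msum_r; [sm|]).
apply: msum_l; [sm|].
apply: mprod_in; [apply: mprod_in; [exact: (usub_int su eu q5s)|exact: rspan_in]|exact: (usub_int su eu q5s)]. }
case: k Hk => [|k] Hk.
{ move=> i j; rewrite /interp /= mul1r.
apply: msum_l; [sm|].
do 11 (apply: msum_r; [sm|]).
apply: msum_l; [sm|].
apply: mprod_in; [apply: mprod_in; [exact: (usub_int su eu q5s)|exact: rspan_in]|exact: (usub_int su eu q5s)]. }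
case: k Hk => [|k] Hk.
{ move=> i j; rewrite /interp /= mul1r.
apply: msum_l; [sm|].
do 12 (apply: msum_r; [sm|]).
apply: msum_l; [sm|].
apply: mprod_in; [apply: mprod_in; [exact: (usub_int su eu q5s)|exact: rspan_in]|exact: (usub_int su eu q5s)]. }
case: k Hk => [|k] Hk.
{ move=> i j; rewrite /interp /= mul1r.
apply: msum_l; [sm|].
do 13 (apply: msum_r; [sm|]).
apply: msum_l; [sm|].
apply: mprod_in; [apply: mprod_in; [exact: (usub_int su eu q5s)|exact: rspan_in]|exact: (usub_int su eu q5s)]. }
case: k Hk => [|k] Hk.
{ move=> i j; rewrite /interp /= mul1r.
apply: msum_l; [sm|].
do 14 (apply: msum_r; [sm|]).
apply: msum_l; [sm|].
apply: mprod_in; [apply: mprod_in; [exact: (usub_int su eu q5s)|exact: rspan_in]|exact: (usub_int su eu q5s)]. }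
case: k Hk => [|k] Hk.
{ move=> i j; rewrite /interp /= mul1r.
apply: msum_l; [sm|].
do 15 (apply: msum_r; [sm|]).
apply: msum_l; [sm|].
apply: mprod_in; [apply: mprod_in; [exact: (usub_int su eu q5s)|exact: rspan_in]|exact: (usub_int su eu q5s)]. }
case: k Hk => [|k] Hk.
{ move=> i j; rewrite /interp /= mul1r.
apply: msum_l; [sm|].
do 16 (apply: msum_r; [sm|]).
apply: mprod_in; [apply: mprod_in; [exact: (usub_int su eu q5s)|exact: rspan_in]|exact: (usub_int su eu q5s)]. }
by [].
Qed.

Lemma factsU w : w \in targU -> Bi s t (U'' s t) w.
Proof.
move=> Hw; have := certU_ok; move/allP/(_ w Hw) => H.
exact: (run_mem su tu eu br q5s q5t HS_U HB_U (fun w (H : famN w) => match notF H with end) H).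
Qed.

Lemma tst_all (i b0 c0 d0 j : int) : U'' s t (s ^ i * t ^ b0 * s ^ c0 * t ^ d0 * s ^ j).
Proof.
have HS := HS_U.
rewrite (_ : _ * _ * _ * _ * _ = s ^ i * t ^ b0 * (s ^ c0 * t ^ d0 * s ^ j)); last by rewrite !mulrA.
apply: (window tu eu q5t HS (m := -2)) => rb Hb.
rewrite (_ : _ * _ * _ = s ^ i * t ^ (-2 + rb%:Z) * s ^ c0 * (t ^ d0 * s ^ j)); last by rewrite !mulrA.
apply: (window su eu q5s HS (m := -2)) => rc Hc.
rewrite (_ : _ * _ * _ = s ^ i * t ^ (-2 + rb%:Z) * s ^ (-2 + rc%:Z) * t ^ d0 * s ^ j); last by rewrite !mulrA.
apply: (window tu eu q5t HS (m := -2)) => rd Hd.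
have Hm : [:: (false, -2 + rb%:Z); (true, -2 + rc%:Z); (false, -2 + rd%:Z)] \in targU.
  by move: rb rc rd Hb Hc Hd; do 3 (case=> [|[|[|[|[|]]]]] //); vm_compute.
have := factsU Hm i j; rewrite /interp /= mul1r.
by rewrite !mulrA.
Qed.

Lemma u12121_U z : u12121 s t z -> U'' s t z.
Proof.
have HS := HS_U.
move: z; apply: (mprod_sub HS) => u v Hu Hv.
move: v Hv; apply: (rspan_sub (submod_mull _ HS)) => _ [k5 ->].
move: u Hu; apply: (mprod_sub (submod_mulr _ HS)) => u v Hu Hv.
move: v Hv; apply: (rspan_sub (submod_mul _ _ HS)) => _ [k4 ->].
move: u Hu; apply: (mprod_sub (submod_mulr _ (submod_mulr _ HS))) => u v Hu Hv.
move: v Hv; apply: (rspan_sub (submod_mul _ _ (submod_mulr _ HS))) => _ [k3 ->].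
move: u Hu; apply: (mprod_sub (submod_mulr _ (submod_mulr _ (submod_mulr _ HS)))) => u v Hu Hv.
move: v Hv; apply: (rspan_sub (submod_mul _ _ (submod_mulr _ (submod_mulr _ HS)))) => _ [k2 ->].
move: u Hu; apply: (rspan_sub (submod_mulr _ (submod_mulr _ (submod_mulr _ (submod_mulr _ HS))))) => _ [k1 ->].
exact: (tst_all (Posz k1) (Posz k2) (Posz k3) (Posz k4) (Posz k5)).
Qed.

Definition TT1 := msum (u1x s (omega s t ^- 2)) (msum (rline ((t ^- 2 * s ^+ 2 * t ^-1 * s * t ^-1))) (u12121 s t)).

Lemma HS_T1 : submod TT1. Proof. rewrite /TT1; sm. Qed.

Lemma om2w1 : interp s t om2T1 = omega s t ^- 2.
Proof.
have E := @nf_sound _ _ s t su tu br (om2T1 ++ ([:: (false, Posz 1); (true, Posz 2); (false, Posz 1)] ++ [:: (false, Posz 1); (true, Posz 2); (false, Posz 1)])) [::] (erefl true).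
rewrite !interp_cat in E.
have Iw : interp s t [:: (false, Posz 1); (true, Posz 2); (false, Posz 1)] = omega s t by rewrite /interp /= mul1r.
rewrite Iw in E.
by apply: inv_eq; [apply: unitrX; exact: omu|exact: E].
Qed.

Lemma om2c1 : GRing.comm (omega s t ^- 2) s.
Proof. by apply/commr_sym; apply: commrV; apply: commrX; apply/commr_sym; exact: om_cs. Qed.

Lemma HB_T1 w : famB1 w -> Bi s t TT1 w.
Proof.
case/orP => [Hw|/eqP ->].
  case: w Hw => [|[[] k1] [|[[] k2] [|[[] k3] [|? ?]]]] //= _ i j.
  rewrite /interp /= mul1r; apply: msum_r; [sm|]; apply: msum_r; [sm|].
  rewrite !mulrA.
  by apply: mprod_in; [apply: mprod_in; [apply: mprod_in; [apply: mprod_in|]|]|];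
    first [exact: (usub_int su eu q5s) | exact: (usub_int tu eu q5t)].
move=> i j; rewrite om2w1 (om_shift om2c1).
apply: msum_l; [sm|].
by apply: mprod_in; [exact: (usub_int su eu q5s)|exact: rspan_in].
Qed.

Lemma HE_T1 w : famE1 w -> Ex s t TT1 w.
Proof.
move/eqP ->; rewrite /Ex.
apply: msum_r; [sm|]; apply: msum_l; [sm|].
by apply: rspan_in; rewrite /interp /= mul1r.
Qed.

Lemma factsT1 w : w \in targT1 -> Ex s t TT1 w.
Proof.
move=> Hw; have := certT1_ok; move/allP/(_ w Hw)/orP => [H|H].
  exact: (Bi_Ex (run_mem su tu eu br q5s q5t HS_T1 HB_T1 HE_T1 H)).
exact: (run_mem su tu eu br q5s q5t HS_T1 HB_T1 HE_T1 H).
Qed.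

Lemma partA1 : msub (mprod (mprod (u2 t) (u1 s)) (rline ((t^-1 * s * t^-1)))) TT1.
Proof.
have HS := HS_T1.
move=> z; apply: (mprod_sub HS) => u v Hu Hv.
move: v Hv; apply: (rspan_sub (submod_mull _ HS)) => _ ->.
move: u Hu; apply: (mprod_sub (submod_mulr _ HS)) => u v Hu Hv.
move: v Hv; apply: (rspan_sub (submod_mul _ _ HS)) => _ [n ->].
move: u Hu; apply: (rspan_sub (submod_mulr _ (submod_mulr _ HS))) => _ [m ->].
rewrite (_ : t ^+ m * s ^+ n * (t^-1 * s * t^-1) = 1 * t ^ (Posz m) * (s ^ (Posz n) * (t^-1 * s * t^-1))); last by rewrite mul1r [RHS]mulrA.
apply: (window tu eu q5t HS (m := -2)) => rb Hb.
rewrite mul1r mulrA.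
apply: (window su eu q5s HS (m := -2)) => rc Hc.
have Hm : [:: (false, -2 + rb%:Z); (true, -2 + rc%:Z); (false, Negz 0); (true, Posz 1); (false, Negz 0)] \in targT1.
  by move: rb rc Hb Hc; do 2 (case=> [|[|[|[|[|]]]]] //); vm_compute.
have := factsT1 Hm; rewrite /Ex /interp /= mul1r.
by rewrite !mulrA.
Qed.

Lemma partB1 : msub TT1 (U'' s t).
Proof.
have HS := HS_U.
move=> z [u [v [Hu [Hv ->]]]]; apply: smD => //.
  apply: msum_r; [sm|].
apply: msum_r; [sm|].
apply: msum_l; [sm|].

  exact: Hu.
move: Hv => [v1 [v2 [Hv1 [Hv2 ->]]]]; apply: smD => //; last exact: u12121_U.
apply: msum_r; [sm|].
apply: msum_r; [sm|].
apply: msum_r; [sm|].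
apply: msum_l; [sm|].

move: v1 Hv1; apply: rspan_sub; first by sm.
move=> _ ->; suff H : u1xu1 s (t ^- 2 * s ^+ 2 * t ^-1 * s * t ^-1) (1 * (t ^- 2 * s ^+ 2 * t ^-1 * s * t ^-1) * 1) by rewrite mul1r mulr1 in H.
by apply: mprod_in; [apply: mprod_in; [apply: rspan_in; exists 0%N|apply: rspan_in]|apply: rspan_in; exists 0%N].
Qed.
Definition TT2 := msum (u1x s (omega s t ^+ 2)) (msum (rline ((t ^+ 2 * s ^- 2 * t * s ^-1 * t))) (u12121 s t)).

Lemma HS_T2 : submod TT2. Proof. rewrite /TT2; sm. Qed.

Lemma om2w2 : interp s t om2T2 = omega s t ^+ 2.
Proof.
have E := @nf_sound _ _ s t su tu br om2T2 ([:: (false, Posz 1); (true, Posz 2); (false, Posz 1)] ++ [:: (false, Posz 1); (true, Posz 2); (false, Posz 1)]) (erefl true).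
rewrite interp_cat in E.
have Iw : interp s t [:: (false, Posz 1); (true, Posz 2); (false, Posz 1)] = omega s t by rewrite /interp /= mul1r.
by rewrite Iw in E; rewrite E.
Qed.

Lemma om2c2 : GRing.comm (omega s t ^+ 2) s.
Proof. by apply/commr_sym; apply: commrX; apply/commr_sym; exact: om_cs. Qed.

Lemma HB_T2 w : famB2 w -> Bi s t TT2 w.
Proof.
case/orP => [Hw|/eqP ->].
  case: w Hw => [|[[] k1] [|[[] k2] [|[[] k3] [|? ?]]]] //= _ i j.
  rewrite /interp /= mul1r; apply: msum_r; [sm|]; apply: msum_r; [sm|].
  rewrite !mulrA.
  by apply: mprod_in; [apply: mprod_in; [apply: mprod_in; [apply: mprod_in|]|]|];
    first [exact: (usub_int su eu q5s) | exact: (usub_int tu eu q5t)].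
move=> i j; rewrite om2w2 (om_shift om2c2).
apply: msum_l; [sm|].
by apply: mprod_in; [exact: (usub_int su eu q5s)|exact: rspan_in].
Qed.

Lemma HE_T2 w : famE2 w -> Ex s t TT2 w.
Proof.
move/eqP ->; rewrite /Ex.
apply: msum_r; [sm|]; apply: msum_l; [sm|].
by apply: rspan_in; rewrite /interp /= mul1r.
Qed.

Lemma factsT2 w : w \in targT2 -> Ex s t TT2 w.
Proof.
move=> Hw; have := certT2_ok; move/allP/(_ w Hw)/orP => [H|H].
  exact: (Bi_Ex (run_mem su tu eu br q5s q5t HS_T2 HB_T2 HE_T2 H)).
exact: (run_mem su tu eu br q5s q5t HS_T2 HB_T2 HE_T2 H).
Qed.

Lemma partA2 : msub (mprod (mprod (u2 t) (u1 s)) (rline ((t * s^-1 * t)))) TT2.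
Proof.
have HS := HS_T2.
move=> z; apply: (mprod_sub HS) => u v Hu Hv.
move: v Hv; apply: (rspan_sub (submod_mull _ HS)) => _ ->.
move: u Hu; apply: (mprod_sub (submod_mulr _ HS)) => u v Hu Hv.
move: v Hv; apply: (rspan_sub (submod_mul _ _ HS)) => _ [n ->].
move: u Hu; apply: (rspan_sub (submod_mulr _ (submod_mulr _ HS))) => _ [m ->].
rewrite (_ : t ^+ m * s ^+ n * (t * s^-1 * t) = 1 * t ^ (Posz m) * (s ^ (Posz n) * (t * s^-1 * t))); last by rewrite mul1r [RHS]mulrA.
apply: (window tu eu q5t HS (m := -2)) => rb Hb.
rewrite mul1r mulrA.
apply: (window su eu q5s HS (m := -2)) => rc Hc.
have Hm : [:: (false, -2 + rb%:Z); (true, -2 + rc%:Z); (false, Posz 1); (true, Negz 0); (false, Posz 1)] \in targT2.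
  by move: rb rc Hb Hc; do 2 (case=> [|[|[|[|[|]]]]] //); vm_compute.
have := factsT2 Hm; rewrite /Ex /interp /= mul1r.
by rewrite !mulrA.
Qed.

Lemma partB2 : msub TT2 (U'' s t).
Proof.
have HS := HS_U.
move=> z [u [v [Hu [Hv ->]]]]; apply: smD => //.
  apply: msum_r; [sm|].
apply: msum_l; [sm|].

  exact: Hu.
move: Hv => [v1 [v2 [Hv1 [Hv2 ->]]]]; apply: smD => //; last exact: u12121_U.
apply: msum_r; [sm|].
apply: msum_r; [sm|].
apply: msum_r; [sm|].
apply: msum_r; [sm|].
apply: msum_l; [sm|].

move: v1 Hv1; apply: rspan_sub; first by sm.
move=> _ ->; suff H : u1xu1 s (t ^+ 2 * s ^- 2 * t * s ^-1 * t) (1 * (t ^+ 2 * s ^- 2 * t * s ^-1 * t) * 1) by rewrite mul1r mulr1 in H.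
by apply: mprod_in; [apply: mprod_in; [apply: rspan_in; exists 0%N|apply: rspan_in]|apply: rspan_in; exists 0%N].
Qed.
End MainU.

End Aux.
Import Aux.

Theorem proposition4p4 (R : comUnitRingType) (A : unitAlgType R)
  (a b c d e : R) (s1 s2 : A) :
  H5_rels a b c d e s1 s2 ->
  (msub (mprod (mprod (u2 s2) (u1 s1)) (rline (s2^-1 * s1 * s2^-1)))
        (msum (u1x s1 ((omega s1 s2) ^- 2))
          (msum (rline (s2^-2 * s1^+2 * s2^-1 * s1 * s2^-1)) (u12121 s1 s2)))
   /\ msub (msum (u1x s1 ((omega s1 s2) ^- 2))
          (msum (rline (s2^-2 * s1^+2 * s2^-1 * s1 * s2^-1)) (u12121 s1 s2)))
        (U'' s1 s2))
  /\
  (msub (mprod (mprod (u2 s2) (u1 s1)) (rline (s2 * s1^-1 * s2)))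
        (msum (u1x s1 ((omega s1 s2) ^+ 2))
          (msum (rline (s2^+2 * s1^-2 * s2 * s1^-1 * s2)) (u12121 s1 s2)))
   /\ msub (msum (u1x s1 ((omega s1 s2) ^+ 2))
          (msum (rline (s2^+2 * s1^-2 * s2 * s1^-1 * s2)) (u12121 s1 s2)))
        (U'' s1 s2)).
Proof.
case=> eu [su tu] br q5s q5t.
split; split.
- exact: (partA1 su tu eu br q5s q5t).
- exact: (partB1 su tu eu br q5s q5t).
- exact: (partA2 su tu eu br q5s q5t).
- exact: (partB2 su tu eu br q5s q5t).
Qed.
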